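(* Let $k$ be a positive integer and let $f\in H^{k,2}$ be such that $M_{f^{(k)}}(1)\leq 1$. Then, for every $0<r<1$, $$\|f\|_2\leq\sum_{s=0}^{k-1}\frac{(1-r)^s}{s!}M_{f^{(s)}}(r)+\left[\frac{\log r}{\log M_{f^{(k)}}(r)}\right]^k.$$
   Context: $\mathbb D$ is the open unit disk. $H^2$ is the Hardy space of $\mathbb D$, $\|f\|_2=\left(\frac{1}{2\pi}\int_0^{2\pi}|f(e^{i\theta})|^2d\theta\right)^{1/2}$ on boundary values, and $H^{k,2}=\{f\in H^2: f^{(j)}\in H^2,\ j=1,\dots,k\}$ (derivatives with respect to $z$). For $g$ analytic in $\mathbb D$ and $0<r<1$, $M_g(r)=\left(\frac{1}{2\pi}\int_0^{2\pi}|g(re^{i\theta})|^2d\theta\right)^{1/2}$, and $M_g(1)=\lim_{r\to1}M_g(r)=\sup_{r<1}M_g(r)$. *)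

(* Defs.v *)
From Stdlib Require Import Reals.
From Coquelicot Require Import Coquelicot.
Open Scope R_scope.

Definition Mmean2 (g : C -> C) (r : R) : R :=
  sqrt (/ (2 * PI) * RInt (fun t => (Cmod (g (r * cos t, r * sin t)%R)) ^ 2) 0 (2 * PI)).

Definition Mradial1 (g : C -> C) : Rbar :=
  Lub_Rbar (fun x => exists r, 0 <= r < 1 /\ x = Mmean2 g r).

Definition holo_disk (g : C -> C) : Prop :=
  forall z : C, Cmod z < 1 -> ex_derive (K := C_AbsRing) (V := C_NormedModule) g z.

Definition in_H2 (g : C -> C) : Prop :=
  holo_disk g /\ Rbar_lt (Mradial1 g) p_infty.

(* ||g||_2 = M_g(1) (boundary L^2 norm, for g in H^2) *)
Definition H2norm (g : C -> C) : R := real (Mradial1 g).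

Definition derivs_on_disk (f : C -> C) (F : nat -> C -> C) : Prop :=
  (forall z : C, Cmod z < 1 -> F O z = f z) /\
  (forall (j : nat) (z : C), Cmod z < 1 ->
     is_derive (K := C_AbsRing) (V := C_NormedModule) (F j) z (F (S j) z)).

Definition in_Hk2 (k : nat) (f : C -> C) (F : nat -> C -> C) : Prop :=
  derivs_on_disk f F /\ forall j : nat, (j <= k)%nat -> in_H2 (F j).

(* [log r / log m]^k, with the convention log 0 = -oo, i.e. the term is 0 when m = 0 *)
Definition log_term (k : nat) (r m : R) : R :=
  if Req_EM_T m 0 then 0 else (ln r / ln m) ^ k.

(* Main.v *)
Require Import Defs.
From Stdlib Require Import Reals Lra Psatz.
From Coquelicot Require Import Coquelicot.
Open Scope R_scope.

Lemma is_derive_eps (f : R -> R) x l :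
  (forall eps : posreal, exists d : posreal, forall y, Rabs (y - x) < d ->
     Rabs (f y - f x - (y - x) * l) <= eps * Rabs (y - x)) ->
  is_derive f x l.
Proof.
  intros H. split.
  - apply is_linear_scal_l.
  - intros y Hy.
    assert (E : x = y) by
      (apply (is_filter_lim_locally_unique (K:=R_AbsRing) (V:=AbsRing_NormedModule R_AbsRing)); exact Hy).
    subst y.
    intros eps. destruct (H eps) as [d Hd]. exists d. intros y Hy'.
    apply Hd. exact Hy'.
Qed.

Lemma is_derive_eps_inv (f : R -> R) x l :
  is_derive f x l ->
  forall eps : posreal, exists d : posreal, forall y, Rabs (y - x) < d ->
     Rabs (f y - f x - (y - x) * l) <= eps * Rabs (y - x).
Proof.
  intros [_ H] eps. destruct (H x (fun P HP => HP) eps) as [d Hd].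
  exists d. intros y Hy. apply (Hd y). exact Hy.
Qed.

Definition holo (G G' : C -> C) := forall z, Cmod z < 1 ->
  is_derive (K:=C_AbsRing) (V:=C_NormedModule) G z (G' z).

Lemma holo_eps G G' z : holo G G' -> Cmod z < 1 ->
  forall eps : posreal, exists d : posreal, forall w, Cmod (w - z) < d ->
    Cmod (G w - G z - (w - z) * G' z) <= eps * Cmod (w - z).
Proof.
  intros H Hz eps. destruct (H z Hz) as [_ H2].
  destruct (H2 z (fun P HP => HP) eps) as [d Hd].
  exists d. intros w Hw. apply (Hd w). exact Hw.
Qed.

Lemma Cmod_fst_le (x : C) : Rabs (fst x) <= Cmod x.
Proof. apply re_le_Cmod. Qed.

Lemma Cmod_snd_le (x : C) : Rabs (snd x) <= Cmod x.
Proof.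
  unfold Cmod. rewrite <- sqrt_Rsqr_abs. apply sqrt_le_1_alt.
  unfold Rsqr. simpl. nra.
Qed.

Lemma Cmod_le_sum (x : C) : Cmod x <= Rabs (fst x) + Rabs (snd x).
Proof.
  unfold Cmod. rewrite <- (sqrt_Rsqr (Rabs (fst x) + Rabs (snd x)))
    by (pose proof (Rabs_pos (fst x)); pose proof (Rabs_pos (snd x)); lra).
  apply sqrt_le_1_alt. unfold Rsqr.
  pose proof (Rabs_pos (fst x)); pose proof (Rabs_pos (snd x)).
  simpl. rewrite !Rmult_1_r.
  assert (E1 : fst x * fst x = Rabs (fst x) * Rabs (fst x)) by
    (rewrite <- Rabs_mult; rewrite Rabs_right by nra; reflexivity).
  assert (E2 : snd x * snd x = Rabs (snd x) * Rabs (snd x)) by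
    (rewrite <- Rabs_mult; rewrite Rabs_right by nra; reflexivity).
  rewrite E1, E2. nra.
Qed.

Lemma chain_gen (G G' : C -> C) (g : R -> C) t a b :
  holo G G' -> Cmod (g t) < 1 ->
  is_derive (fun t => fst (g t)) t a -> is_derive (fun t => snd (g t)) t b ->
  is_derive (fun t => fst (G (g t))) t (fst (Cmult (a, b) (G' (g t)))) /\
  is_derive (fun t => snd (G (g t))) t (snd (Cmult (a, b) (G' (g t)))).
Proof.
  intros HG Hz Ha Hb.
  set (z := g t). set (l := G' z).
  set (K := Rabs a + Rabs b + 2 + Rabs (fst l) + Rabs (snd l)).
  assert (HK : 2 <= K) by (unfold K; pose proof (Rabs_pos a); pose proof (Rabs_pos b);
     pose proof (Rabs_pos (fst l)); pose proof (Rabs_pos (snd l)); lra).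
  assert (main : forall eps : posreal, exists d : posreal, forall y, Rabs (y - t) < d ->
     Rabs (fst (G (g y)) - fst (G z) - (y - t) * (a * fst l - b * snd l)) <= eps * Rabs (y - t) /\
     Rabs (snd (G (g y)) - snd (G z) - (y - t) * (a * snd l + b * fst l)) <= eps * Rabs (y - t)).
  { intros eps.
    assert (Hetap : 0 < Rmin 1 (eps / K)).
    { apply Rmin_glb_lt. lra. apply Rdiv_lt_0_compat. apply cond_pos. lra. }
    set (eta := mkposreal _ Hetap).
    destruct (holo_eps G G' z HG Hz eta) as [d1 Hd1].
    destruct (is_derive_eps_inv _ _ _ Ha eta) as [d2 Hd2].
    destruct (is_derive_eps_inv _ _ _ Hb eta) as [d3 Hd3].
    assert (Hd4 : 0 < Rmin (Rmin d2 d3) (d1 / (Rabs a + Rabs b + 2))).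
    { apply Rmin_glb_lt. apply Rmin_glb_lt; apply cond_pos.
      apply Rdiv_lt_0_compat. apply cond_pos.
      pose proof (Rabs_pos a); pose proof (Rabs_pos b); lra. }
    exists (mkposreal _ Hd4). intros y Hy. simpl in Hy.
    assert (Hy2 : Rabs (y - t) < d2) by
      (eapply Rlt_le_trans; [exact Hy|]; eapply Rle_trans; [apply Rmin_l|apply Rmin_l]).
    assert (Hy3 : Rabs (y - t) < d3) by
      (eapply Rlt_le_trans; [exact Hy|]; eapply Rle_trans; [apply Rmin_l|apply Rmin_r]).
    assert (Hy1 : Rabs (y - t) < d1 / (Rabs a + Rabs b + 2)) by
      (eapply Rlt_le_trans; [exact Hy|]; apply Rmin_r).
    specialize (Hd2 y Hy2). specialize (Hd3 y Hy3).
    assert (Heta1 : eta <= 1) by (simpl; apply Rmin_l).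
    assert (Heta2 : eta * K <= eps).
    { simpl. destruct (Rle_dec 1 (eps / K)).
      - rewrite Rmin_left by lra. apply Rle_trans with (eps / K * K).
        apply Rmult_le_compat_r; lra. unfold Rdiv. rewrite Rmult_assoc, Rinv_l by lra. lra.
      - rewrite Rmin_right by lra. unfold Rdiv. rewrite Rmult_assoc, Rinv_l by lra. lra. }
    set (p1 := fst (g y) - fst z). set (p2 := snd (g y) - snd z).
    set (h := y - t).
    assert (Hp1 : Rabs (p1 - h * a) <= eta * Rabs h) by (unfold p1, h, z; exact Hd2).
    assert (Hp2 : Rabs (p2 - h * b) <= eta * Rabs h) by (unfold p2, h, z; exact Hd3).
    assert (Hp1' : Rabs p1 <= Rabs h * (Rabs a + 1)).
    { replace p1 with ((p1 - h * a) + h * a) by ring.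
      eapply Rle_trans. apply Rabs_triang. rewrite Rabs_mult.
      pose proof (Rabs_pos h). pose proof (cond_pos eta). nra. }
    assert (Hp2' : Rabs p2 <= Rabs h * (Rabs b + 1)).
    { replace p2 with ((p2 - h * b) + h * b) by ring.
      eapply Rle_trans. apply Rabs_triang. rewrite Rabs_mult.
      pose proof (Rabs_pos h). pose proof (cond_pos eta). nra. }
    assert (Hwz : Cmod (g y - z) <= Rabs p1 + Rabs p2).
    { eapply Rle_trans. apply Cmod_le_sum. simpl. unfold p1, p2. right. reflexivity. }
    assert (Hwz2 : Cmod (g y - z) < d1).
    { eapply Rle_lt_trans. exact Hwz.
      pose proof (Rabs_pos a); pose proof (Rabs_pos b). pose proof (Rabs_pos h).
      apply Rle_lt_trans with (Rabs h * (Rabs a + Rabs b + 2)). nra.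
      apply Rmult_lt_reg_r with (/ (Rabs a + Rabs b + 2)).
      apply Rinv_0_lt_compat; lra.
      rewrite Rmult_assoc, Rinv_r by lra. rewrite Rmult_1_r. exact Hy1. }
    specialize (Hd1 (g y) Hwz2).
    pose proof (Cmod_fst_le (G (g y) - G z - (g y - z) * G' z)) as Hf.
    pose proof (Cmod_snd_le (G (g y) - G z - (g y - z) * G' z)) as Hs.
    fold l in Hd1, Hf, Hs. simpl in Hf, Hs. fold p1 p2 in Hf, Hs.
    assert (HE : eta * Cmod (g y - z) <= eta * (Rabs h * (Rabs a + Rabs b + 2))).
    { apply Rmult_le_compat_l. pose proof (cond_pos eta); lra.
      pose proof (Rabs_pos h). nra. }
    assert (Hl1 := Rabs_pos (fst l)). assert (Hl2 := Rabs_pos (snd l)).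
    assert (Hh := Rabs_pos h). assert (He := cond_pos eta).
    assert (Hfin : eta * (Rabs h * (Rabs a + Rabs b + 2)) + eta * Rabs h * (Rabs (fst l) + Rabs (snd l))
                   <= eps * Rabs h).
    { apply Rle_trans with (eta * K * Rabs h). unfold K. right. ring.
      apply Rmult_le_compat_r; lra. }
    split.
    + replace (fst (G (g y)) - fst (G z) - h * (a * fst l - b * snd l)) with
        ((fst (G (g y)) + - fst (G z) + - (p1 * fst l - p2 * snd l))
         + ((p1 - h * a) * fst l - (p2 - h * b) * snd l)) by ring.
      eapply Rle_trans. apply Rabs_triang.
      eapply Rle_trans. apply Rplus_le_compat. eapply Rle_trans. exact Hf. exact Hd1.
      eapply Rle_trans. apply Rabs_triang. rewrite Rabs_Ropp, !Rabs_mult. 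
      apply Rplus_le_compat. apply Rmult_le_compat_r. apply Rabs_pos. exact Hp1.
      apply Rmult_le_compat_r. apply Rabs_pos. exact Hp2.
      nra.
    + replace (snd (G (g y)) - snd (G z) - h * (a * snd l + b * fst l)) with
        ((snd (G (g y)) + - snd (G z) + - (p1 * snd l + p2 * fst l))
         + ((p1 - h * a) * snd l + (p2 - h * b) * fst l)) by ring.
      eapply Rle_trans. apply Rabs_triang.
      eapply Rle_trans. apply Rplus_le_compat. eapply Rle_trans. exact Hs. exact Hd1.
      eapply Rle_trans. apply Rabs_triang. rewrite !Rabs_mult. 
      apply Rplus_le_compat. apply Rmult_le_compat_r. apply Rabs_pos. exact Hp1.
      apply Rmult_le_compat_r. apply Rabs_pos. exact Hp2.
      nra. }
  split; apply is_derive_eps; intros eps; destruct (main eps) as [d Hd];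
    exists d; intros y Hy; [apply (proj1 (Hd y Hy)) | apply (proj2 (Hd y Hy))].
Qed.

Definition Pp (r t : R) : C := (r * cos t, r * sin t).

Lemma Cmod_Pp r t : Cmod (Pp r t) = Rabs r.
Proof.
  unfold Cmod, Pp. simpl. rewrite <- sqrt_Rsqr_abs. f_equal. unfold Rsqr.
  replace (r * cos t * (r * cos t * 1) + r * sin t * (r * sin t * 1)) with
    (r * r * (Rsqr (sin t) + Rsqr (cos t))) by (unfold Rsqr; ring). rewrite sin2_cos2. ring.
Qed.

Lemma drho (G G' : C -> C) x th : holo G G' -> Rabs x < 1 ->
  is_derive (fun u => fst (G (Pp u th))) x (fst (Cmult (cos th, sin th) (G' (Pp x th)))) /\
  is_derive (fun u => snd (G (Pp u th))) x (snd (Cmult (cos th, sin th) (G' (Pp x th)))).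
Proof.
  intros HG Hx. apply (chain_gen G G' (fun u => Pp u th)).
  exact HG. rewrite Cmod_Pp. exact Hx.
  unfold Pp; simpl. auto_derive. auto. ring.
  unfold Pp; simpl. auto_derive. auto. ring.
Qed.

Lemma dtheta (G G' : C -> C) r th : holo G G' -> Rabs r < 1 ->
  is_derive (fun v => fst (G (Pp r v))) th (fst (Cmult (- r * sin th, r * cos th) (G' (Pp r th)))) /\
  is_derive (fun v => snd (G (Pp r v))) th (snd (Cmult (- r * sin th, r * cos th) (G' (Pp r th)))).
Proof.
  intros HG Hx. apply (chain_gen G G' (fun v => Pp r v)).
  exact HG. rewrite Cmod_Pp. exact Hx.
  unfold Pp; simpl. auto_derive. auto. ring.
  unfold Pp; simpl. auto_derive. auto. ring.
Qed.

Lemma locally_2d_and (P Q : R -> R -> Prop) x y :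
  locally_2d P x y -> locally_2d Q x y -> locally_2d (fun u v => P u v /\ Q u v) x y.
Proof.
  intros [d1 H1] [d2 H2].
  assert (Hd : 0 < Rmin d1 d2) by (apply Rmin_glb_lt; apply cond_pos).
  exists (mkposreal _ Hd). simpl. intros u v Hu Hv. split.
  apply H1; eapply Rlt_le_trans; eauto; apply Rmin_l.
  apply H2; eapply Rlt_le_trans; eauto; apply Rmin_r.
Qed.

Lemma cont2_ucos x y : continuity_2d_pt (fun u v => u * cos v) x y.
Proof.
  apply continuity_2d_pt_mult. apply continuity_2d_pt_id1.
  apply (continuity_1d_2d_pt_comp cos (fun u v => v)).
  apply continuity_cos. apply continuity_2d_pt_id2.
Qed.

Lemma cont2_usin x y : continuity_2d_pt (fun u v => u * sin v) x y.
Proof.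
  apply continuity_2d_pt_mult. apply continuity_2d_pt_id1.
  apply (continuity_1d_2d_pt_comp sin (fun u v => v)).
  apply continuity_sin. apply continuity_2d_pt_id2.
Qed.

Lemma holo_cont2 (G G' : C -> C) x y : holo G G' -> Rabs x < 1 ->
  continuity_2d_pt (fun u v => fst (G (Pp u v))) x y /\
  continuity_2d_pt (fun u v => snd (G (Pp u v))) x y.
Proof.
  intros HG Hx.
  set (z := Pp x y). set (l := G' z).
  assert (Hz : Cmod z < 1) by (unfold z; rewrite Cmod_Pp; exact Hx).
  assert (HL : 0 < Cmod l + 1) by (pose proof (Cmod_ge_0 l); lra).
  assert (key : forall eps : posreal, locally_2d (fun u v => Cmod (G (Pp u v) - G z) < eps) x y).
  { intros eps.
    destruct (holo_eps G G' z HG Hz (mkposreal 1 Rlt_0_1)) as [d1 Hd1].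
    assert (Hm : 0 < Rmin d1 (eps / (Cmod l + 1)) / 2).
    { apply Rdiv_lt_0_compat; [|lra]. apply Rmin_glb_lt. apply cond_pos.
      apply Rdiv_lt_0_compat. apply cond_pos. lra. }
    pose proof (locally_2d_and _ _ x y (cont2_ucos x y (mkposreal _ Hm)) (cont2_usin x y (mkposreal _ Hm))) as H.
    revert H. apply locally_2d_impl. apply locally_2d_forall. intros u v [H1 H2].
    simpl in H1, H2.
    assert (Hw : Cmod (Pp u v - z) < Rmin d1 (eps / (Cmod l + 1))).
    { eapply Rle_lt_trans. apply Cmod_le_sum. unfold z, Pp; simpl.
      replace (u * cos v + - (x * cos y)) with (u * cos v - x * cos y) by ring.
      replace (u * sin v + - (x * sin y)) with (u * sin v - x * sin y) by ring. lra. }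
    assert (Hw1 : Cmod (Pp u v - z) < d1) by (eapply Rlt_le_trans; [exact Hw|apply Rmin_l]).
    assert (Hw2 : Cmod (Pp u v - z) < eps / (Cmod l + 1)) by (eapply Rlt_le_trans; [exact Hw|apply Rmin_r]).
    specialize (Hd1 _ Hw1). simpl in Hd1. fold l in Hd1.
    replace (G (Pp u v) - G z)%C with ((G (Pp u v) - G z - (Pp u v - z) * l) + (Pp u v - z) * l)%C by ring.
    eapply Rle_lt_trans. apply Cmod_triangle. rewrite Cmod_mult.
    apply Rle_lt_trans with (Cmod (Pp u v - z) * (Cmod l + 1)). nra.
    apply Rmult_lt_reg_r with (/ (Cmod l + 1)). apply Rinv_0_lt_compat; lra.
    rewrite Rmult_assoc, Rinv_r by lra. rewrite Rmult_1_r. exact Hw2. }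
  split; intros eps; generalize (key eps); apply locally_2d_impl;
    apply locally_2d_forall; intros u v H.
  - eapply Rle_lt_trans; [|exact H]. eapply Rle_trans; [|apply Cmod_fst_le].
    right. simpl. reflexivity.
  - eapply Rle_lt_trans; [|exact H]. eapply Rle_trans; [|apply Cmod_snd_le].
    right. simpl. reflexivity.
Qed.

Lemma cont2_snd (f : R -> R -> R) x y :
  continuity_2d_pt f x y -> continuity_pt (fun v => f x v) y.
Proof.
  intros H eps Heps. destruct (H (mkposreal _ Heps)) as [d Hd].
  exists d. split. apply cond_pos. intros v [_ Hv]. simpl in Hv |- *. unfold R_dist in *.
  apply Hd. rewrite Rminus_eq_0, Rabs_R0. apply cond_pos. exact Hv.
Qed.

Lemma cont2_fst (f : R -> R -> R) x y :
  continuity_2d_pt f x y -> continuity_pt (fun u => f u y) x.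
Proof.
  intros H eps Heps. destruct (H (mkposreal _ Heps)) as [d Hd].
  exists d. split. apply cond_pos. intros v [_ Hv]. simpl in Hv |- *. unfold R_dist in *.
  apply Hd. exact Hv. rewrite Rminus_eq_0, Rabs_R0. apply cond_pos.
Qed.

Lemma cont2_ex_RInt (f : R -> R -> R) x a b :
  (forall t, Rmin a b <= t <= Rmax a b -> continuity_2d_pt f x t) ->
  ex_RInt (f x) a b.
Proof.
  intros H. apply (ex_RInt_continuous (V:=R_CompleteNormedModule)). intros z Hz.
  apply continuity_pt_filterlim. apply (cont2_snd f x z). apply H. exact Hz.
Qed.

Lemma param_deriv (f g : R -> R -> R) a b lo hi x :
  lo < x < hi ->
  (forall u t, lo < u < hi -> is_derive (fun u => f u t) u (g u t)) ->
  (forall u t, lo < u < hi -> continuity_2d_pt f u t) ->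
  (forall u t, lo < u < hi -> continuity_2d_pt g u t) ->
  is_derive (fun u => RInt (f u) a b) x (RInt (g x) a b).
Proof.
  intros Hx Hd Hf Hg.
  assert (Hloc : locally x (fun y => lo < y < hi)).
  { assert (Hp : 0 < Rmin (x - lo) (hi - x)) by (apply Rmin_glb_lt; lra).
    exists (mkposreal _ Hp). intros y Hy. simpl in Hy. unfold ball in Hy; simpl in Hy.
    unfold AbsRing_ball, abs, minus, plus, opp in Hy; simpl in Hy.
    apply Rabs_lt_between' in Hy. destruct Hy as [H1 H2].
    pose proof (Rmin_l (x - lo) (hi - x)). pose proof (Rmin_r (x - lo) (hi - x)). lra. }
  replace (RInt (g x) a b) with (RInt (fun t => Derive (fun u => f u t) x) a b).
  2: { apply RInt_ext. intros t _. apply is_derive_unique. apply Hd. exact Hx. }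
  apply (is_derive_RInt_param (fun u t => f u t)).
  - revert Hloc. apply filter_imp. intros y Hy t _. eexists. apply Hd. exact Hy.
  - intros t _. apply continuity_2d_pt_ext_loc with (fun u v => g u v).
    + assert (Hp : 0 < Rmin (x - lo) (hi - x)) by (apply Rmin_glb_lt; lra).
      exists (mkposreal _ Hp). intros u v Hu _. simpl in Hu.
      apply Rabs_lt_between' in Hu. destruct Hu as [H1 H2].
      pose proof (Rmin_l (x - lo) (hi - x)). pose proof (Rmin_r (x - lo) (hi - x)).
      symmetry. apply is_derive_unique. apply Hd. lra.
    + apply Hg. exact Hx.
  - revert Hloc. apply filter_imp. intros y Hy. apply cont2_ex_RInt.
    intros t _. apply Hf. exact Hy.
Qed.

Lemma ex_RInt_lin (F X : R -> R) c a b :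
  ex_RInt F a b -> ex_RInt X a b -> ex_RInt (fun t => F t + c * X t) a b.
Proof.
  intros HF HX. apply (ex_RInt_plus (V:=R_CompleteNormedModule)). exact HF.
  apply (ex_RInt_scal (V:=R_CompleteNormedModule)). exact HX.
Qed.

Lemma RInt_lin (F X : R -> R) c a b :
  ex_RInt F a b -> ex_RInt X a b ->
  RInt (fun t => F t + c * X t) a b = RInt F a b + c * RInt X a b.
Proof.
  intros HF HX.
  rewrite (RInt_plus (V:=R_CompleteNormedModule) F (fun t => c * X t)); auto.
  change (RInt F a b + RInt (fun t : R => c * X t) a b = RInt F a b + c * RInt X a b).
  f_equal. exact (RInt_scal (V:=R_CompleteNormedModule) X a b c HX).
  apply (ex_RInt_scal (V:=R_CompleteNormedModule)). exact HX.
Qed.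

Lemma quad_nonneg A B C : 0 <= C -> (forall l, 0 <= A - 2 * l * B + l * l * C) -> B * B <= A * C.
Proof.
  intros HC H. destruct (Req_dec C 0) as [E|E].
  - subst C. destruct (Req_dec B 0) as [EB|EB]. subst B. nra.
    exfalso. specialize (H ((A + 1) / (2 * B))).
    replace (A - 2 * ((A + 1) / (2 * B)) * B + (A + 1) / (2 * B) * ((A + 1) / (2 * B)) * 0)
      with (-1) in H by (field; auto). lra.
  - specialize (H (B / C)).
    replace (A - 2 * (B / C) * B + B / C * (B / C) * C) with ((A * C - B * B) / C) in H
      by (field; auto).
    assert (0 < C) by lra.
    apply Rmult_le_compat_r with (r := C) in H; [|lra].
    unfold Rdiv in H. rewrite Rmult_assoc, Rinv_l in H by lra. lra.
Qed.

Lemma CS_int (f1 f2 g1 g2 : R -> R) a b : a <= b ->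
  ex_RInt (fun t => f1 t ^ 2 + f2 t ^ 2) a b ->
  ex_RInt (fun t => g1 t ^ 2 + g2 t ^ 2) a b ->
  ex_RInt (fun t => f1 t * g1 t + f2 t * g2 t) a b ->
  (RInt (fun t => f1 t * g1 t + f2 t * g2 t) a b) ^ 2 <=
  RInt (fun t => f1 t ^ 2 + f2 t ^ 2) a b * RInt (fun t => g1 t ^ 2 + g2 t ^ 2) a b.
Proof.
  intros Hab HF HG HX.
  set (A := RInt (fun t => f1 t ^ 2 + f2 t ^ 2) a b).
  set (B := RInt (fun t => f1 t * g1 t + f2 t * g2 t) a b).
  set (Cc := RInt (fun t => g1 t ^ 2 + g2 t ^ 2) a b).
  assert (HC : 0 <= Cc).
  { apply RInt_ge_0; auto. intros; nra. }
  rewrite pow2_sqrt_2 || idtac. simpl. rewrite Rmult_1_r.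
  apply quad_nonneg. exact HC. intros l.
  set (F := fun t => f1 t ^ 2 + f2 t ^ 2).
  set (X := fun t => f1 t * g1 t + f2 t * g2 t).
  set (Gq := fun t => g1 t ^ 2 + g2 t ^ 2).
  assert (H1 : ex_RInt (fun t => F t + (- 2 * l) * X t) a b) by (apply ex_RInt_lin; auto).
  assert (E : RInt (fun t => (F t + (- 2 * l) * X t) + (l * l) * Gq t) a b
    = A - 2 * l * B + l * l * Cc).
  { rewrite (RInt_lin (fun t => F t + (- 2 * l) * X t) Gq (l * l) a b H1 HG).
    rewrite (RInt_lin F X (- 2 * l) a b HF HX). unfold A, B, Cc. change (RInt F a b + -2*l*RInt X a b + l*l*RInt Gq a b = RInt F a b - 2*l*RInt X a b + l*l*RInt Gq a b). ring. }
  rewrite <- E. apply RInt_ge_0; auto.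
  apply (ex_RInt_lin (fun t => F t + (- 2 * l) * X t) Gq); auto.
  intros x _. unfold F, X, Gq. pose proof (pow2_ge_0 (f1 x - l*g1 x)); pose proof (pow2_ge_0 (f2 x - l * g2 x)). nra.
Qed.

Lemma mono_deriv (f df : R -> R) a b : a <= b ->
  (forall x, a <= x <= b -> is_derive f x (df x)) ->
  (forall x, a <= x <= b -> 0 <= df x) -> f a <= f b.
Proof.
  intros Hab Hd Hp.
  destruct (MVT_gen f a b df) as [c [Hc E]].
  - intros x Hx. rewrite Rmin_left, Rmax_right in Hx by lra. apply Hd. lra.
  - intros x Hx. rewrite Rmin_left, Rmax_right in Hx by lra.
    apply continuity_pt_filterlim. apply (ex_derive_continuous (K:=R_AbsRing) (V:=R_NormedModule)).
    eexists. apply Hd. lra.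
  - rewrite Rmin_left, Rmax_right in Hc by lra.
    assert (0 <= df c) by (apply Hp; lra). nra.
Qed.

Lemma dR_eq (f : R -> R) (x l1 l2 : R) : is_derive f x l1 -> l1 = l2 -> is_derive f x l2.
Proof. intros H E; subst; exact H. Qed.
Lemma dR_plus (f g : R -> R) (x df dg : R) : is_derive f x df -> is_derive g x dg ->
  is_derive (fun t => f t + g t) x (df + dg).
Proof. intros. apply (is_derive_plus f g x df dg); auto. Qed.
Lemma dR_minus (f g : R -> R) (x df dg : R) : is_derive f x df -> is_derive g x dg ->
  is_derive (fun t => f t - g t) x (df - dg).
Proof. intros. apply (is_derive_minus f g x df dg); auto. Qed.
Lemma dR_opp (f : R -> R) (x df : R) : is_derive f x df ->
  is_derive (fun t => - f t) x (- df).
Proof. intros. apply (is_derive_opp f x df); auto. Qed.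
Lemma dR_mult (f g : R -> R) (x df dg : R) : is_derive f x df -> is_derive g x dg ->
  is_derive (fun t => f t * g t) x (df * g x + f x * dg).
Proof. intros. apply (is_derive_mult f g x df dg); auto. intros; apply Rmult_comm. Qed.
Lemma dR_const (c x : R) : is_derive (fun _ => c) x 0.
Proof. apply (is_derive_const (K:=R_AbsRing) (V:=R_NormedModule)). Qed.
Lemma dR_id (x : R) : is_derive (fun t => t) x 1.
Proof. apply (is_derive_id (K:=R_AbsRing)). Qed.
Lemma dR_pow2 (f : R -> R) (x df : R) : is_derive f x df ->
  is_derive (fun t => f t ^ 2) x (2 * f x * df).
Proof.
  intros H. eapply dR_eq. apply (is_derive_ext (fun t => f t * f t)).
  intros t; simpl; rewrite Rmult_1_r; reflexivity. apply dR_mult; exact H. ring.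
Qed.
Lemma dR_cos (x : R) : is_derive cos x (- sin x).
Proof. apply is_derive_Reals. apply derivable_pt_lim_cos. Qed.
Lemma dR_sin (x : R) : is_derive sin x (cos x).
Proof. apply is_derive_Reals. apply derivable_pt_lim_sin. Qed.
Lemma dR_cos' (x : R) : is_derive (fun t => cos t) x (- sin x).
Proof. apply dR_cos. Qed.
Lemma dR_sin' (x : R) : is_derive (fun t => sin t) x (cos x).
Proof. apply dR_sin. Qed.

Ltac dstep := match goal with
  | |- is_derive (fun _ => ?c) _ _ => apply dR_const
  | |- is_derive (fun t => t) _ _ => apply dR_id
  | |- is_derive (fun t => cos t) _ _ => apply dR_cos'
  | |- is_derive (fun t => sin t) _ _ => apply dR_sin'
  | |- is_derive (fun t => @?f t ^ 2) _ _ => apply (dR_pow2 f)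
  | |- is_derive (fun t => @?f t + @?g t) _ _ => apply (dR_plus f g)
  | |- is_derive (fun t => @?f t - @?g t) _ _ => apply (dR_minus f g)
  | |- is_derive (fun t => - @?f t) _ _ => apply (dR_opp f)
  | |- is_derive (fun t => @?f t * @?g t) _ _ => apply (dR_mult f g)
  | |- is_derive _ _ _ => eassumption
  end.

Lemma cont2_cos x y : continuity_2d_pt (fun u v => cos v) x y.
Proof. apply (continuity_1d_2d_pt_comp cos (fun u v => v)). apply continuity_cos. apply continuity_2d_pt_id2. Qed.
Lemma cont2_sin x y : continuity_2d_pt (fun u v => sin v) x y.
Proof. apply (continuity_1d_2d_pt_comp sin (fun u v => v)). apply continuity_sin. apply continuity_2d_pt_id2. Qed.
Lemma cont2_pow2 (f : R -> R -> R) x y : continuity_2d_pt f x y ->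
  continuity_2d_pt (fun u v => f u v ^ 2) x y.
Proof.
  intros H. apply continuity_2d_pt_ext with (fun u v => f u v * f u v).
  intros; simpl; ring. apply continuity_2d_pt_mult; auto.
Qed.

Ltac c2step := match goal with
  | |- continuity_2d_pt (fun _ _ => ?c) _ _ => apply continuity_2d_pt_const
  | |- continuity_2d_pt (fun u _ => u) _ _ => apply continuity_2d_pt_id1
  | |- continuity_2d_pt (fun _ v => v) _ _ => apply continuity_2d_pt_id2
  | |- continuity_2d_pt (fun _ v => cos v) _ _ => apply cont2_cos
  | |- continuity_2d_pt (fun _ v => sin v) _ _ => apply cont2_sin
  | |- continuity_2d_pt (fun u v => @?f u v ^ 2) _ _ => apply (cont2_pow2 f)
  | |- continuity_2d_pt (fun u v => @?f u v + @?g u v) _ _ => apply (continuity_2d_pt_plus f g)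
  | |- continuity_2d_pt (fun u v => @?f u v - @?g u v) _ _ => apply (continuity_2d_pt_minus f g)
  | |- continuity_2d_pt (fun u v => - @?f u v) _ _ => apply (continuity_2d_pt_opp f)
  | |- continuity_2d_pt (fun u v => @?f u v * @?g u v) _ _ => apply (continuity_2d_pt_mult f g)
  | |- continuity_2d_pt _ _ _ => assumption
  end.

Definition sqn (G : C -> C) (r v : R) := fst (G (Pp r v)) ^ 2 + snd (G (Pp r v)) ^ 2.
Definition uu (G : C -> C) (r : R) := RInt (sqn G r) 0 (2 * PI).

Definition A1f (G0 G1 : C -> C) (r v : R) :=
  fst (G0 (Pp r v)) * fst (Cmult (cos v, sin v) (G1 (Pp r v))) +
  snd (G0 (Pp r v)) * snd (Cmult (cos v, sin v) (G1 (Pp r v))).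

Definition A2f (G0 G1 G2 : C -> C) (r v : R) :=
  fst (Cmult (cos v, sin v) (G1 (Pp r v))) ^ 2 + snd (Cmult (cos v, sin v) (G1 (Pp r v))) ^ 2 +
  fst (G0 (Pp r v)) * fst (Cmult (cos v, sin v) (Cmult (cos v, sin v) (G2 (Pp r v)))) +
  snd (G0 (Pp r v)) * snd (Cmult (cos v, sin v) (Cmult (cos v, sin v) (G2 (Pp r v)))).

Definition Psif (G0 G1 : C -> C) (r v : R) :=
  fst (G0 (Pp r v)) * snd (Cmult (cos v, sin v) (G1 (Pp r v))) -
  snd (G0 (Pp r v)) * fst (Cmult (cos v, sin v) (G1 (Pp r v))).

Lemma d_sqn G0 G1 x v : holo G0 G1 -> Rabs x < 1 ->
  is_derive (fun u => sqn G0 u v) x (2 * A1f G0 G1 x v).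
Proof.
  intros H0 Hx. destruct (drho G0 G1 x v H0 Hx) as [Ha Hb]. unfold sqn.
  eapply dR_eq. repeat dstep. unfold A1f. ring.
Qed.

Lemma d_A1 G0 G1 G2 x v : holo G0 G1 -> holo G1 G2 -> Rabs x < 1 ->
  is_derive (fun u => A1f G0 G1 u v) x (A2f G0 G1 G2 x v).
Proof.
  intros H0 H1 Hx. destruct (drho G0 G1 x v H0 Hx) as [Ha Hb].
  destruct (drho G1 G2 x v H1 Hx) as [Hc Hd].
  simpl in Ha, Hb, Hc, Hd. unfold A1f. simpl.
  eapply dR_eq. repeat dstep. unfold A2f. simpl. ring.
Qed.

Lemma cs1 (t : R) : cos t ^ 2 + sin t ^ 2 = 1.
Proof. rewrite <- (sin2_cos2 t). unfold Rsqr. ring. Qed.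

Lemma d_Psi G0 G1 G2 r th : holo G0 G1 -> holo G1 G2 -> Rabs r < 1 ->
  is_derive (fun v => Psif G0 G1 r v) th
    (A1f G0 G1 r th + r * A2f G0 G1 G2 r th
       - 2 * r * (fst (G1 (Pp r th)) ^ 2 + snd (G1 (Pp r th)) ^ 2)).
Proof.
  intros H0 H1 Hr. destruct (dtheta G0 G1 r th H0 Hr) as [Ha Hb].
  destruct (dtheta G1 G2 r th H1 Hr) as [Hc Hd].
  simpl in Ha, Hb, Hc, Hd. unfold Psif. simpl.
  eapply dR_eq. repeat dstep. unfold A1f, A2f. simpl.
  pose proof (cs1 th) as HCS.
  match goal with |- ?L = ?R =>
    assert (E : L - R = 2 * r * (fst (G1 (Pp r th)) ^ 2 + snd (G1 (Pp r th)) ^ 2) *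
                        (1 - (cos th ^ 2 + sin th ^ 2))) by ring end.
  rewrite HCS in E. lra.
Qed.

Ltac rring := match goal with |- @eq _ ?a ?b => change (@eq R a b) end; ring.

Lemma RInt_scalR (f : R -> R) c a b : ex_RInt f a b ->
  RInt (fun t => c * f t) a b = c * RInt f a b.
Proof. intros H. exact (RInt_scal (V:=R_CompleteNormedModule) f a b c H). Qed.

Lemma ex_RInt_scalR (f : R -> R) c a b : ex_RInt f a b -> ex_RInt (fun t => c * f t) a b.
Proof. intros H. apply (ex_RInt_scal (V:=R_CompleteNormedModule)). exact H. Qed.

Lemma dR_ln (f : R -> R) (x df : R) : is_derive f x df -> 0 < f x ->
  is_derive (fun t => ln (f t)) x (df / f x).
Proof.
  intros H Hp. eapply dR_eq. apply (is_derive_comp ln f x (/ f x) df).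
  apply is_derive_ln; auto. exact H. unfold scal; simpl. unfold mult; simpl.
  change (df * / f x = df / f x). unfold Rdiv. reflexivity.
Qed.

Lemma dR_div (f g : R -> R) (x df dg : R) : is_derive f x df -> is_derive g x dg -> g x <> 0 ->
  is_derive (fun t => f t / g t) x ((df * g x - f x * dg) / g x ^ 2).
Proof. intros; apply is_derive_div; auto. Qed.

Lemma lim_arg q t K : 0 < t < 1 -> 0 <= K ->
  (forall t', t < t' < 1 -> q * (ln t' - ln t) <= K) -> q * (- ln t) <= K.
Proof.
  intros Ht HK H. destruct (Rle_dec (q * - ln t) K) as [E|E]; auto. exfalso.
  apply Rnot_le_lt in E.
  assert (Hlt : ln t < 0) by (rewrite <- ln_1; apply ln_increasing; lra).
  assert (Hq : 0 < q) by (destruct (Rle_dec q 0); [nra|lra]).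
  set (dl := q * - ln t - K).
  set (m := Rmax t (exp (- dl / (2 * q)))).
  assert (Hm1 : exp (- dl / (2 * q)) < 1).
  { rewrite <- exp_0. apply exp_increasing. unfold dl. apply Ropp_lt_cancel.
    rewrite Ropp_0. unfold Rdiv. rewrite Ropp_mult_distr_l, Ropp_involutive.
    apply Rmult_lt_0_compat. lra. apply Rinv_0_lt_compat. lra. }
  assert (Hm : m < 1) by (unfold m; apply Rmax_lub_lt; lra).
  assert (Hmt : t <= m) by apply Rmax_l.
  assert (Hme : exp (- dl / (2 * q)) <= m) by apply Rmax_r.
  specialize (H ((m + 1) / 2)). 
  assert (Hl : - dl / (2 * q) <= ln ((m + 1) / 2)).
  { rewrite <- (ln_exp (- dl / (2 * q))) at 1. apply ln_le. apply exp_pos. lra. }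
  assert (H' : q * (ln ((m + 1) / 2) - ln t) <= K) by (apply H; lra).
  assert (q * (- dl / (2 * q)) = - dl / 2) by (field; lra).
  assert (q * (- dl / (2 * q) - ln t) <= q * (ln ((m + 1) / 2) - ln t)).
  { apply Rmult_le_compat_l; lra. }
  unfold dl in *. nra.
Qed.

Lemma ln_le_sub1 x : 0 < x -> ln x <= x - 1.
Proof.
  intros Hx. pose proof (exp_ineq1_le (ln x)). rewrite exp_ln in H; lra.
Qed.

Section Fam.
Variables G0 G1 G2 G3 : C -> C.
Hypothesis H0 : holo G0 G1.
Hypothesis H1 : holo G1 G2.
Hypothesis H2 : holo G2 G3.

Lemma cont_sqn0 x y : Rabs x < 1 -> continuity_2d_pt (sqn G0) x y.
Proof.
  intros Hx. destruct (holo_cont2 G0 G1 x y H0 Hx) as [a b].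
  unfold sqn. repeat c2step.
Qed.

Lemma cont_sqn1 x y : Rabs x < 1 -> continuity_2d_pt (sqn G1) x y.
Proof.
  intros Hx. destruct (holo_cont2 G1 G2 x y H1 Hx) as [a b].
  unfold sqn. repeat c2step.
Qed.

Lemma cont_A1 x y : Rabs x < 1 -> continuity_2d_pt (A1f G0 G1) x y.
Proof.
  intros Hx. destruct (holo_cont2 G0 G1 x y H0 Hx) as [a b].
  destruct (holo_cont2 G1 G2 x y H1 Hx) as [c d].
  unfold A1f. simpl. repeat c2step.
Qed.

Lemma cont_A2 x y : Rabs x < 1 -> continuity_2d_pt (A2f G0 G1 G2) x y.
Proof.
  intros Hx. destruct (holo_cont2 G0 G1 x y H0 Hx) as [a b].
  destruct (holo_cont2 G1 G2 x y H1 Hx) as [c d].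
  destruct (holo_cont2 G2 G3 x y H2 Hx) as [p q].
  unfold A2f. simpl. repeat c2step.
Qed.


Lemma PI2_pos : 0 <= 2 * PI.
Proof. pose proof PI_RGT_0; lra. Qed.

Lemma exR_sqn0 x : Rabs x < 1 -> ex_RInt (sqn G0 x) 0 (2 * PI).
Proof. intros Hx. apply cont2_ex_RInt. intros; apply cont_sqn0; auto. Qed.
Lemma exR_sqn1 x : Rabs x < 1 -> ex_RInt (sqn G1 x) 0 (2 * PI).
Proof. intros Hx. apply cont2_ex_RInt. intros; apply cont_sqn1; auto. Qed.
Lemma exR_A1 x : Rabs x < 1 -> ex_RInt (A1f G0 G1 x) 0 (2 * PI).
Proof. intros Hx. apply cont2_ex_RInt. intros; apply cont_A1; auto. Qed.
Lemma exR_A2 x : Rabs x < 1 -> ex_RInt (A2f G0 G1 G2 x) 0 (2 * PI).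
Proof. intros Hx. apply cont2_ex_RInt. intros; apply cont_A2; auto. Qed.

Definition U1 x := 2 * RInt (A1f G0 G1 x) 0 (2 * PI).

Lemma u_deriv x : Rabs x < 1 -> is_derive (uu G0) x (U1 x).
Proof.
  intros Hx. unfold U1. rewrite <- RInt_scalR by (apply exR_A1; auto).
  unfold uu. apply (param_deriv (sqn G0) (fun u v => 2 * A1f G0 G1 u v) 0 (2 * PI) (-1) 1 x).
  - apply Rabs_lt_between. exact Hx.
  - intros u t Hu. apply d_sqn. exact H0. apply Rabs_lt_between. exact Hu.
  - intros u t Hu. apply cont_sqn0. apply Rabs_lt_between. exact Hu.
  - intros u t Hu. apply continuity_2d_pt_mult. apply continuity_2d_pt_const.
    apply cont_A2 || apply cont_A1. apply Rabs_lt_between. exact Hu.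
Qed.

Lemma U1_deriv x : Rabs x < 1 -> is_derive U1 x (2 * RInt (A2f G0 G1 G2 x) 0 (2 * PI)).
Proof.
  intros Hx. unfold U1. apply (is_derive_scal (fun u => RInt (A1f G0 G1 u) 0 (2 * PI))).
  apply (param_deriv (A1f G0 G1) (A2f G0 G1 G2) 0 (2 * PI) (-1) 1 x).
  - apply Rabs_lt_between. exact Hx.
  - intros u t Hu. apply d_A1. exact H0. exact H1. apply Rabs_lt_between. exact Hu.
  - intros u t Hu. apply cont_A1. apply Rabs_lt_between. exact Hu.
  - intros u t Hu. apply cont_A2. apply Rabs_lt_between. exact Hu.
Qed.

Lemma Pp_2PI r : Pp r (2 * PI) = Pp r 0.
Proof. unfold Pp. rewrite cos_2PI, sin_2PI, cos_0, sin_0. reflexivity. Qed.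

Lemma key_identity x : Rabs x < 1 ->
  RInt (A1f G0 G1 x) 0 (2 * PI) + x * RInt (A2f G0 G1 G2 x) 0 (2 * PI) = 2 * x * uu G1 x.
Proof.
  intros Hx.
  set (dP := fun v => A1f G0 G1 x v + x * A2f G0 G1 G2 x v
       - 2 * x * (fst (G1 (Pp x v)) ^ 2 + snd (G1 (Pp x v)) ^ 2)).
  assert (HdP : forall v, is_derive (fun v => Psif G0 G1 x v) v (dP v)).
  { intros v. apply d_Psi; auto. }
  assert (HcdP : forall v, continuity_2d_pt (fun u v => A1f G0 G1 u v + u * A2f G0 G1 G2 u v
       - 2 * u * sqn G1 u v) x v).
  { intros v. apply continuity_2d_pt_minus. apply continuity_2d_pt_plus.
    apply cont_A1; auto. apply continuity_2d_pt_mult. apply continuity_2d_pt_id1. apply cont_A2; auto.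
    apply continuity_2d_pt_mult. apply continuity_2d_pt_mult. apply continuity_2d_pt_const.
    apply continuity_2d_pt_id1. apply cont_sqn1; auto. }
  assert (HI : is_RInt dP 0 (2 * PI) (minus (Psif G0 G1 x (2 * PI)) (Psif G0 G1 x 0))).
  { apply (is_RInt_derive (V:=R_CompleteNormedModule)). intros v _. apply HdP.
    intros v _. apply continuity_pt_filterlim.
    apply (cont2_snd (fun u v => A1f G0 G1 u v + u * A2f G0 G1 G2 u v - 2 * u * sqn G1 u v) x v).
    apply HcdP. }
  assert (HP : Psif G0 G1 x (2 * PI) = Psif G0 G1 x 0).
  { unfold Psif. rewrite Pp_2PI, cos_2PI, sin_2PI, cos_0, sin_0. reflexivity. }
  rewrite HP in HI. 
  assert (HI0 : RInt dP 0 (2 * PI) = 0).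
  { rewrite (is_RInt_unique (V:=R_CompleteNormedModule) dP 0 (2 * PI) _ HI). unfold minus, plus, opp; simpl. ring. }
  assert (Hex : ex_RInt dP 0 (2 * PI)) by (eexists; exact HI).
  rewrite <- (RInt_lin (A1f G0 G1 x) (A2f G0 G1 G2 x) x 0 (2 * PI) (exR_A1 x Hx) (exR_A2 x Hx)).
  transitivity (RInt (fun v => dP v + (2 * x) * sqn G1 x v) 0 (2 * PI)).
  - apply RInt_ext. intros v _. unfold dP, sqn. rring.
  - rewrite RInt_lin; auto. rewrite HI0. unfold uu. ring.
    apply exR_sqn1; auto.
Qed.

Definition Dq x := x * U1 x.

Lemma Dq_deriv x : Rabs x < 1 -> is_derive Dq x (4 * x * uu G1 x).
Proof.
  intros Hx. unfold Dq. eapply dR_eq. apply dR_mult. apply dR_id. apply U1_deriv; auto.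
  replace (4 * x * uu G1 x) with (2 * (2 * x * uu G1 x)) by ring.
  rewrite <- (key_identity x Hx). unfold U1. ring.
Qed.

Lemma Dq_sq x : Rabs x < 1 -> Dq x ^ 2 <= 4 * x ^ 2 * uu G0 x * uu G1 x.
Proof.
  intros Hx. unfold Dq, U1.
  assert (Epw : forall t, sqn G1 x t =
     fst (Cmult (cos t, sin t) (G1 (Pp x t))) ^ 2 + snd (Cmult (cos t, sin t) (G1 (Pp x t))) ^ 2).
  { intros t. unfold sqn. simpl.
    match goal with |- ?L = ?R =>
      assert (E : R - L = (fst (G1 (Pp x t)) ^ 2 + snd (G1 (Pp x t)) ^ 2) * (cos t ^ 2 + sin t ^ 2 - 1)) by ring end.
    rewrite cs1 in E. lra. }
  assert (E : RInt (sqn G1 x) 0 (2 * PI) =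
     RInt (fun t => fst (Cmult (cos t, sin t) (G1 (Pp x t))) ^ 2 + snd (Cmult (cos t, sin t) (G1 (Pp x t))) ^ 2) 0 (2 * PI)).
  { apply RInt_ext. intros t _. apply Epw. }
  assert (HCS := CS_int (fun t => fst (G0 (Pp x t))) (fun t => snd (G0 (Pp x t)))
      (fun t => fst (Cmult (cos t, sin t) (G1 (Pp x t)))) (fun t => snd (Cmult (cos t, sin t) (G1 (Pp x t))))
      0 (2 * PI) PI2_pos).
  unfold uu. rewrite E.
  assert (HA : RInt (A1f G0 G1 x) 0 (2 * PI) ^ 2 <= RInt (sqn G0 x) 0 (2 * PI) *
     RInt (fun t => fst (Cmult (cos t, sin t) (G1 (Pp x t))) ^ 2 + snd (Cmult (cos t, sin t) (G1 (Pp x t))) ^ 2) 0 (2 * PI)).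
  { apply HCS. apply exR_sqn0; auto.
    eapply ex_RInt_ext; [|apply (exR_sqn1 x Hx)]. intros t _. apply Epw.
  apply exR_A1; auto. }
  replace ((x * (2 * RInt (A1f G0 G1 x) 0 (2 * PI))) ^ 2) with (4 * x^2 * RInt (A1f G0 G1 x) 0 (2 * PI) ^ 2) by ring.
  pose proof (pow2_ge_0 x). 
  assert (0 <= 4 * x ^ 2) by lra.
  rewrite (Rmult_assoc (4 * x ^ 2) (RInt (sqn G0 x) 0 (2 * PI))).
  apply Rmult_le_compat_l; assumption.
Qed.

Lemma uu_ge0 (G G' : C -> C) x : holo G G' -> Rabs x < 1 -> 0 <= uu G x.
Proof.
  intros HG Hx. unfold uu. apply RInt_ge_0. apply PI2_pos.
  apply cont2_ex_RInt. intros t _. destruct (holo_cont2 G G' x t HG Hx) as [a b].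
  unfold sqn. repeat c2step.
  intros; unfold sqn. pose proof (pow2_ge_0 (fst (G (Pp x x0)))); pose proof (pow2_ge_0 (snd (G (Pp x x0)))); lra.
Qed.

Lemma Dq0 : Dq 0 = 0.
Proof. unfold Dq. ring. Qed.

Lemma Dq_ge0 x : 0 <= x < 1 -> 0 <= Dq x.
Proof.
  intros Hx. rewrite <- Dq0.
  apply (mono_deriv Dq (fun y => 4 * y * uu G1 y)). lra.
  intros y Hy. apply Dq_deriv. apply Rabs_lt_between; lra.
  intros y Hy. pose proof (uu_ge0 G1 G2 y H1 ltac:(apply Rabs_lt_between; lra)). nra.
Qed.

Lemma U1_ge0 x : 0 <= x < 1 -> 0 <= U1 x.
Proof.
  intros Hx. destruct (Req_dec x 0) as [E|E].
  - subst x. assert (HA : is_derive Dq 0 (1 * U1 0 + 0 * (2 * RInt (A2f G0 G1 G2 0) 0 (2 * PI)))).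
    { unfold Dq. apply dR_mult. apply dR_id. apply U1_deriv. rewrite Rabs_R0; lra. }
    assert (HB := Dq_deriv 0 ltac:(rewrite Rabs_R0; lra)).
    apply is_derive_unique in HA. apply is_derive_unique in HB. 
    assert (U1 0 = 0) by (rewrite HA in HB; lra). lra.
  - pose proof (Dq_ge0 x Hx). unfold Dq in H. 
    destruct (Rle_dec 0 (U1 x)); auto. nra.
Qed.

Lemma uu_mono x y : 0 <= x <= y -> y < 1 -> uu G0 x <= uu G0 y.
Proof.
  intros Hxy Hy. apply (mono_deriv (uu G0) U1). lra.
  intros z Hz. apply u_deriv. apply Rabs_lt_between; lra.
  intros z Hz. apply U1_ge0. lra.
Qed.

Definition qf eps x := Dq x / (uu G0 x + eps).

Lemma qf_deriv_nonneg eps x : 0 < eps -> 0 < x < 1 ->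
  is_derive (qf eps) x ((4 * x * uu G1 x * (uu G0 x + eps) - Dq x * U1 x) / (uu G0 x + eps) ^ 2) /\
  0 <= (4 * x * uu G1 x * (uu G0 x + eps) - Dq x * U1 x) / (uu G0 x + eps) ^ 2.
Proof.
  intros He Hx. assert (Hxa : Rabs x < 1) by (apply Rabs_lt_between; lra).
  pose proof (uu_ge0 G0 G1 x H0 Hxa). pose proof (uu_ge0 G1 G2 x H1 Hxa).
  split.
  - unfold qf. eapply dR_eq. apply (dR_div Dq (fun z => uu G0 z + eps)). apply Dq_deriv; auto.
    apply (dR_plus (uu G0) (fun _ => eps)). apply u_deriv; auto.
    apply (dR_const eps). simpl. lra. simpl. f_equal. ring.
  - apply Rmult_le_pos. 2: { apply Rlt_le, Rinv_0_lt_compat. apply pow_lt. lra. }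
    pose proof (Dq_sq x Hxa). unfold Dq in *.
    assert (U1 x ^ 2 <= 4 * uu G0 x * uu G1 x).
    { assert (0 < x ^ 2) by (apply pow_lt; lra).
      apply Rmult_le_reg_l with (x ^ 2); auto. nra. }
    assert (x * U1 x ^ 2 <= x * (4 * uu G0 x * uu G1 x)) by (apply Rmult_le_compat_l; lra).
    assert (0 <= x * uu G1 x * eps) by (apply Rmult_le_pos; [apply Rmult_le_pos|]; lra).
    simpl in *. nra.
Qed.

Lemma qf_mono eps y t : 0 < eps -> 0 < y <= t -> t < 1 -> qf eps y <= qf eps t.
Proof.
  intros He Hy Ht. apply (mono_deriv (qf eps)
    (fun x => (4 * x * uu G1 x * (uu G0 x + eps) - Dq x * U1 x) / (uu G0 x + eps) ^ 2)). lra.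
  intros z Hz. apply qf_deriv_nonneg; auto; lra.
  intros z Hz. apply qf_deriv_nonneg; auto; lra.
Qed.

Lemma phi_deriv eps c0 y : 0 < eps -> 0 < y < 1 ->
  is_derive (fun z => ln (uu G0 z + eps) - c0 * ln z) y ((qf eps y - c0) / y).
Proof.
  intros He Hy. assert (Hya : Rabs y < 1) by (apply Rabs_lt_between; lra).
  pose proof (uu_ge0 G0 G1 y H0 Hya).
  eapply dR_eq. apply (dR_minus (fun z => ln (uu G0 z + eps)) (fun z => c0 * ln z)).
  apply (dR_ln (fun z => uu G0 z + eps)). apply (dR_plus (uu G0) (fun _ => eps)). apply u_deriv; auto.
  apply (dR_const eps). simpl. lra. apply (dR_mult (fun _ => c0) (fun z => ln z)). apply (dR_const c0).
  apply (dR_ln (fun z => z)). apply dR_id. simpl. lra.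
  unfold qf, Dq. field. lra.
Qed.

Lemma three_step1 eps r t : 0 < eps -> 0 < r <= t -> t < 1 ->
  ln (uu G0 t + eps) - qf eps t * ln t <= ln (uu G0 r + eps) - qf eps t * ln r.
Proof.
  intros He Hr Ht.
  pose proof (mono_deriv (fun z => - (ln (uu G0 z + eps) - qf eps t * ln z))
    (fun z => - ((qf eps z - qf eps t) / z)) r t ltac:(lra)) as M.
  cut (- (ln (uu G0 r + eps) - qf eps t * ln r) <= - (ln (uu G0 t + eps) - qf eps t * ln t)). lra.
  apply M.
  - intros z Hz. apply dR_opp. apply phi_deriv; auto; lra.
  - intros z Hz. pose proof (qf_mono eps z t He ltac:(lra) Ht).
    assert (0 <= (qf eps t - qf eps z) / z) by (apply Rmult_le_pos; [lra|apply Rlt_le, Rinv_0_lt_compat; lra]).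
    unfold Rdiv in *. lra.
Qed.

Lemma three_step2 eps t t' : 0 < eps -> 0 < t <= t' -> t' < 1 ->
  ln (uu G0 t + eps) - qf eps t * ln t <= ln (uu G0 t' + eps) - qf eps t * ln t'.
Proof.
  intros He Hr Ht.
  apply (mono_deriv (fun z => ln (uu G0 z + eps) - qf eps t * ln z)
    (fun z => (qf eps z - qf eps t) / z) t t' ltac:(lra)).
  - intros z Hz. apply phi_deriv; auto; lra.
  - intros z Hz. pose proof (qf_mono eps t z He ltac:(lra) ltac:(lra)).
    apply Rmult_le_pos; [lra|apply Rlt_le, Rinv_0_lt_compat; lra].
Qed.

Lemma three_circles eps r t Lb : 0 < eps -> 0 < r <= t -> t < 1 ->
  (forall y, 0 <= y < 1 -> uu G0 y <= Lb) ->
  ln (uu G0 t + eps) * (- ln r) <=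
    (- ln t) * ln (uu G0 r + eps) + (ln t - ln r) * ln (Lb + eps).
Proof.
  intros He Hr Ht HL.
  assert (Hut : 0 <= uu G0 t) by (apply (uu_ge0 G0 G1); auto; apply Rabs_lt_between; lra).
  assert (Hur : 0 <= uu G0 r) by (apply (uu_ge0 G0 G1); auto; apply Rabs_lt_between; lra).
  set (c := ln (Lb + eps)).
  assert (Hc1 : ln (uu G0 t + eps) <= c) by (apply ln_le; [lra|]; pose proof (HL t); lra).
  assert (Hc2 : ln (uu G0 r + eps) <= c) by (apply ln_le; [lra|]; pose proof (HL r); lra).
  set (q := qf eps t).
  assert (S1 := three_step1 eps r t He Hr Ht). fold q in S1.
  assert (S2 : q * (- ln t) <= c - ln (uu G0 t + eps)).
  { apply lim_arg. lra. lra. intros t' Ht'.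
    pose proof (three_step2 eps t t' He ltac:(lra) ltac:(lra)). fold q in H.
    assert (0 <= uu G0 t') by (apply (uu_ge0 G0 G1); auto; apply Rabs_lt_between; lra).
    assert (ln (uu G0 t' + eps) <= c) by (apply ln_le; [lra|]; pose proof (HL t'); lra).
    lra. }
  assert (Hlt : ln t < 0) by (rewrite <- ln_1; apply ln_increasing; lra).
  assert (Hlr : ln r <= ln t) by (apply ln_le; lra).
  set (pt := ln (uu G0 t + eps)) in *. set (pr := ln (uu G0 r + eps)) in *.
  assert (E1 : pt * (- ln t) <= pr * (- ln t) + q * (- ln t) * (ln t - ln r)).
  { replace (q * - ln t * (ln t - ln r)) with ((q * (ln t - ln r)) * (- ln t)) by ring.
    rewrite <- Rmult_plus_distr_r. apply Rmult_le_compat_r; lra. }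
  assert (E2 : q * (- ln t) * (ln t - ln r) <= (c - pt) * (ln t - ln r)).
  { apply Rmult_le_compat_r; lra. }
  nra.
Qed.
End Fam.

Lemma ln_add_le x e : 0 < x -> 0 <= e -> ln (x + e) <= ln x + e / x.
Proof.
  intros Hx He. replace (ln (x + e)) with (ln x + ln ((x + e) / x)).
  - pose proof (ln_le_sub1 ((x + e) / x) ltac:(apply Rdiv_lt_0_compat; lra)).
    replace ((x + e) / x - 1) with (e / x) in H by (field; lra). lra.
  - rewrite ln_div by lra. ring.
Qed.

Lemma le_of_eps_bound A B K : 0 <= K -> (forall e, 0 < e -> A <= B + e * K) -> A <= B.
Proof.
  intros HK H. destruct (Rle_dec A B) as [E|E]; auto. apply Rnot_le_lt in E.
  specialize (H ((A - B) / (2 * (K + 1))) ltac:(apply Rdiv_lt_0_compat; lra)).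
  assert ((A - B) / (2 * (K + 1)) * K <= (A - B) / 2).
  { apply Rmult_le_reg_r with (2 * (K + 1)). lra.
    field_simplify; try lra. }
  lra.
Qed.

Lemma exp_le_mono x y : x <= y -> exp x <= exp y.
Proof. intros [H|H]. left; apply exp_increasing; auto. subst; lra. Qed.

Lemma tc_div G0 G1 G2 G3 r t Lb eps : holo G0 G1 -> holo G1 G2 -> holo G2 G3 -> 0 < eps ->
  0 < r <= t -> t < 1 -> (forall y, 0 <= y < 1 -> uu G0 y <= Lb) ->
  ln (uu G0 t + eps) <= (ln t / ln r) * ln (uu G0 r + eps) + (1 - ln t / ln r) * ln (Lb + eps).
Proof.
  intros Ha Hb Hc He Hr Ht HL.
  assert (Hlr : ln r < 0) by (rewrite <- ln_1; apply ln_increasing; lra).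
  pose proof (three_circles G0 G1 G2 G3 Ha Hb Hc eps r t Lb He Hr Ht HL) as T.
  apply Rmult_le_reg_r with (- ln r). lra.
  replace ((ln t / ln r * ln (uu G0 r + eps) + (1 - ln t / ln r) * ln (Lb + eps)) * - ln r)
    with (- ln t * ln (uu G0 r + eps) + (ln t - ln r) * ln (Lb + eps)) by (field; lra).
  exact T.
Qed.

Lemma tc_final G0 G1 G2 G3 r t Lb : holo G0 G1 -> holo G1 G2 -> holo G2 G3 ->
  0 < r <= t -> t < 1 -> 0 < Lb -> (forall y, 0 <= y < 1 -> uu G0 y <= Lb) ->
  (uu G0 r = 0 -> uu G0 t = 0) /\
  (0 < uu G0 r -> uu G0 t <= exp ((ln t / ln r) * ln (uu G0 r) + (1 - ln t / ln r) * ln Lb)).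
Proof.
  intros Ha Hb Hc Hr Ht HLb HL.
  assert (Hlr : ln r < 0) by (rewrite <- ln_1; apply ln_increasing; lra).
  assert (Hlt : ln t < 0) by (rewrite <- ln_1; apply ln_increasing; lra).
  assert (Hrt : ln r <= ln t) by (apply ln_le; lra).
  assert (Hlam1 : 0 < ln t / ln r).
  { replace (ln t / ln r) with ((- ln t) / (- ln r)) by (field; lra).
    apply Rdiv_lt_0_compat; lra. }
  assert (Hlam2 : ln t / ln r <= 1).
  { replace (ln t / ln r) with ((- ln t) / (- ln r)) by (field; lra).
    apply Rmult_le_reg_r with (- ln r). lra. field_simplify; lra. }
  set (lam := ln t / ln r) in *.
  assert (Hut : 0 <= uu G0 t) by (apply (uu_ge0 G0 G1); auto; apply Rabs_lt_between; lra).
  assert (Hur : 0 <= uu G0 r) by (apply (uu_ge0 G0 G1); auto; apply Rabs_lt_between; lra).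
  assert (TC := fun e He => tc_div G0 G1 G2 G3 r t Lb e Ha Hb Hc He Hr Ht HL). fold lam in TC.
  split.
  - intros E0. rewrite E0 in TC. destruct (Req_dec (uu G0 t) 0) as [Z|Z]; auto. exfalso.
    set (X := uu G0 t) in *. assert (HX : 0 < X) by lra.
    set (e := Rmin 1 (exp ((ln X - (1 - lam) * ln (Lb + 1) - 1) / lam))).
    assert (He : 0 < e) by (apply Rmin_glb_lt; [lra|apply exp_pos]).
    specialize (TC e He). rewrite Rplus_0_l in TC.
    assert (H1 : ln X <= ln (X + e)) by (apply ln_le; lra).
    assert (H2 : ln (Lb + e) <= ln (Lb + 1)) by (apply ln_le; [lra|]; pose proof (Rmin_l 1 (exp ((ln X - (1 - lam) * ln (Lb + 1) - 1) / lam))); fold e in H; lra).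
    assert (H3 : ln e <= (ln X - (1 - lam) * ln (Lb + 1) - 1) / lam).
    { rewrite <- (ln_exp ((ln X - (1 - lam) * ln (Lb + 1) - 1) / lam)). apply ln_le. lra. apply Rmin_r. }
    assert (H4 : lam * ln e <= ln X - (1 - lam) * ln (Lb + 1) - 1).
    { apply Rmult_le_compat_l with (r := lam) in H3; [|lra].
      replace (lam * ((ln X - (1 - lam) * ln (Lb + 1) - 1) / lam)) with (ln X - (1 - lam) * ln (Lb + 1) - 1) in H3 by (field; lra). exact H3. }
    assert ((1 - lam) * ln (Lb + e) <= (1 - lam) * ln (Lb + 1)) by (apply Rmult_le_compat_l; lra).
    lra.
  - intros Hp. destruct (Req_dec (uu G0 t) 0) as [Z|Z].
    { rewrite Z. left. apply exp_pos. }
    rewrite <- (exp_ln (uu G0 t)) by lra.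
    apply exp_le_mono.
    apply (le_of_eps_bound _ _ (lam / uu G0 r + (1 - lam) / Lb)).
    { apply Rplus_le_le_0_compat; apply Rmult_le_pos; try lra; apply Rlt_le, Rinv_0_lt_compat; lra. }
    intros e He. specialize (TC e He).
    assert (H1 : ln (uu G0 t) <= ln (uu G0 t + e)) by (apply ln_le; lra).
    pose proof (ln_add_le (uu G0 r) e Hp ltac:(lra)).
    pose proof (ln_add_le Lb e HLb ltac:(lra)).
    assert (lam * ln (uu G0 r + e) <= lam * (ln (uu G0 r) + e / uu G0 r)) by (apply Rmult_le_compat_l; lra).
    assert ((1 - lam) * ln (Lb + e) <= (1 - lam) * (ln Lb + e / Lb)) by (apply Rmult_le_compat_l; lra).
    replace (lam * ln (uu G0 r) + (1 - lam) * ln Lb + e * (lam / uu G0 r + (1 - lam) / Lb))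
      with (lam * (ln (uu G0 r) + e / uu G0 r) + (1 - lam) * (ln Lb + e / Lb)) by (field; lra).
    lra.
Qed.


Lemma dR_pow (f : R -> R) (n : nat) (x df : R) : is_derive f x df ->
  is_derive (fun t => f t ^ n) x (INR n * df * f x ^ Init.Nat.pred n).
Proof. intros H. apply is_derive_pow. exact H. Qed.
Lemma dR_divc (f : R -> R) (c x df : R) : is_derive f x df ->
  is_derive (fun t => f t / c) x (df / c).
Proof.
  intros H. eapply dR_eq. apply (dR_mult f (fun _ => / c)). exact H. apply dR_const.
  unfold Rdiv. ring.
Qed.

Ltac dstep2 := match goal with
  | |- is_derive (fun _ => ?c) _ _ => apply dR_const
  | |- is_derive (fun t => t) _ _ => apply dR_id
  | |- is_derive (fun t => cos t) _ _ => apply dR_cos'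
  | |- is_derive (fun t => sin t) _ _ => apply dR_sin'
  | |- is_derive (fun t => @?f t ^ ?n) _ _ => apply (dR_pow f n)
  | |- is_derive (fun t => @?f t / ?c) _ _ => apply (dR_divc f c)
  | |- is_derive (fun t => @?f t + @?g t) _ _ => apply (dR_plus f g)
  | |- is_derive (fun t => @?f t - @?g t) _ _ => apply (dR_minus f g)
  | |- is_derive (fun t => - @?f t) _ _ => apply (dR_opp f)
  | |- is_derive (fun t => @?f t * @?g t) _ _ => apply (dR_mult f g)
  | |- is_derive _ _ _ => eassumption
  end.

Definition Ep (s : nat) (th : R) : C := (cos (INR s * th), sin (INR s * th)).
Definition sc (c : R) (z : C) : C := (c * fst z, c * snd z).
Definition term (F : nat -> C -> C) (rho : R) (s : nat) (t th : R) : C :=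
  sc ((rho - t) ^ s / INR (Factorial.fact s)) (Cmult (Ep s th) (F s (Pp t th))).
Fixpoint Tsum (F : nat -> C -> C) (rho : R) (n : nat) (t th : R) : C :=
  match n with
  | O => (0, 0)
  | S n => Cplus (Tsum F rho n t th) (term F rho n t th)
  end.
Definition Kterm (F : nat -> C -> C) (rho : R) (n : nat) (t th : R) : C :=
  sc ((rho - t) ^ n / INR (Factorial.fact n)) (Cmult (Ep (S n) th) (F (S n) (Pp t th))).

Lemma Ep_S s th : Ep (S s) th = Cmult (Ep s th) (cos th, sin th).
Proof.
  unfold Ep. rewrite S_INR. replace ((INR s + 1) * th) with (INR s * th + th) by ring.
  rewrite cos_plus, sin_plus. unfold Cmult; simpl. f_equal; ring.
Qed.

Lemma d_term (F : nat -> C -> C) rho s t th : holo (F s) (F (S s)) -> Rabs t < 1 ->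
  is_derive (fun t => fst (term F rho s t th)) t
    (- INR s * (rho - t) ^ Init.Nat.pred s / INR (Factorial.fact s) * fst (Cmult (Ep s th) (F s (Pp t th)))
     + fst (Kterm F rho s t th)) /\
  is_derive (fun t => snd (term F rho s t th)) t
    (- INR s * (rho - t) ^ Init.Nat.pred s / INR (Factorial.fact s) * snd (Cmult (Ep s th) (F s (Pp t th)))
     + snd (Kterm F rho s t th)).
Proof.
  intros HF Ht. destruct (drho (F s) (F (S s)) t th HF Ht) as [Ha Hb].
  simpl in Ha, Hb. unfold Kterm. rewrite Ep_S. unfold term, sc, Ep. simpl.
  split; (eapply dR_eq; [repeat dstep2|]); simpl; field; apply INR_fact_neq_0.
Qed.

Lemma d_Tsum (F : nat -> C -> C) rho n t th : (forall j, holo (F j) (F (S j))) -> Rabs t < 1 ->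
  is_derive (fun t => fst (Tsum F rho (S n) t th)) t (fst (Kterm F rho n t th)) /\
  is_derive (fun t => snd (Tsum F rho (S n) t th)) t (snd (Kterm F rho n t th)).
Proof.
  intros HF Ht. induction n as [|n IH].
  - destruct (d_term F rho 0 t th (HF 0%nat) Ht) as [Ha Hb]. simpl.
    split; (eapply dR_eq; [apply dR_plus; [apply dR_const| eassumption]|]); simpl; field.
  - destruct (d_term F rho (S n) t th (HF (S n)) Ht) as [Ha Hb].
    destruct IH as [Ia Ib].
    split.
    + eapply dR_eq. apply (dR_plus (fun t => fst (Tsum F rho (S n) t th)) (fun t => fst (term F rho (S n) t th))); eassumption.
      unfold Kterm, sc, Ep. cbn [fst snd Cmult Init.Nat.pred]. rewrite (fact_simpl n), mult_INR, !S_INR.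
      field. split; try apply INR_fact_neq_0; pose proof (pos_INR n); lra.
    + eapply dR_eq. apply (dR_plus (fun t => snd (Tsum F rho (S n) t th)) (fun t => snd (term F rho (S n) t th))); eassumption.
      unfold Kterm, sc, Ep. cbn [fst snd Cmult Init.Nat.pred]. rewrite (fact_simpl n), mult_INR, !S_INR.
      field. split; try apply INR_fact_neq_0; pose proof (pos_INR n); lra.
Qed.

Definition nrm (phi : R -> C) : R :=
  sqrt (/ (2 * PI) * RInt (fun t => Cmod (phi t) ^ 2) 0 (2 * PI)).

Lemma Cmod_sq (z : C) : Cmod z ^ 2 = fst z ^ 2 + snd z ^ 2.
Proof.
  unfold Cmod. rewrite pow2_sqrt. reflexivity.
  pose proof (pow2_ge_0 (fst z)); pose proof (pow2_ge_0 (snd z)); lra.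
Qed.

Lemma nrm_eq (phi : R -> C) :
  nrm phi = sqrt (/ (2 * PI) * RInt (fun t => fst (phi t) ^ 2 + snd (phi t) ^ 2) 0 (2 * PI)).
Proof. unfold nrm. f_equal. f_equal. apply RInt_ext. intros; apply Cmod_sq. Qed.

Lemma sqrt_add_sq a e : 0 <= a -> 0 <= e -> sqrt (a + e ^ 2) <= sqrt a + e.
Proof.
  intros Ha He. rewrite <- (sqrt_pow2 (sqrt a + e)) by (pose proof (sqrt_pos a); lra).
  apply sqrt_le_1_alt. pose proof (sqrt_pos a).
  replace ((sqrt a + e) ^ 2) with (sqrt a * sqrt a + 2 * sqrt a * e + e ^ 2) by ring.
  rewrite sqrt_sqrt by lra. nra.
Qed.

Lemma minkowski (Hf Kf : R -> R -> C) (B dB : R -> R) lo hi al be :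
  lo < al <= be -> be < hi ->
  (forall t th, lo < t < hi ->
     is_derive (fun t => fst (Hf t th)) t (fst (Kf t th)) /\
     is_derive (fun t => snd (Hf t th)) t (snd (Kf t th))) ->
  (forall t th, lo < t < hi ->
     continuity_2d_pt (fun u v => fst (Hf u v)) t th /\ continuity_2d_pt (fun u v => snd (Hf u v)) t th /\
     continuity_2d_pt (fun u v => fst (Kf u v)) t th /\ continuity_2d_pt (fun u v => snd (Kf u v)) t th) ->
  (forall t, al <= t <= be -> is_derive B t (dB t) /\ nrm (Kf t) <= dB t) ->
  nrm (Hf be) <= nrm (Hf al) + (B be - B al).
Proof.
  intros Hab Hbh Hd Hc HB.
  set (n2 := fun t => RInt (fun v => fst (Hf t v) ^ 2 + snd (Hf t v) ^ 2) 0 (2 * PI)).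
  set (nK := fun t => RInt (fun v => fst (Kf t v) ^ 2 + snd (Kf t v) ^ 2) 0 (2 * PI)).
  set (X := fun t => RInt (fun v => fst (Hf t v) * fst (Kf t v) + snd (Hf t v) * snd (Kf t v)) 0 (2 * PI)).
  set (c := / (2 * PI)).
  assert (Hc0 : 0 < c) by (unfold c; apply Rinv_0_lt_compat; pose proof PI_RGT_0; lra).
  assert (Hex : forall t, lo < t < hi ->
     ex_RInt (fun v => fst (Hf t v) ^ 2 + snd (Hf t v) ^ 2) 0 (2 * PI) /\
     ex_RInt (fun v => fst (Kf t v) ^ 2 + snd (Kf t v) ^ 2) 0 (2 * PI) /\
     ex_RInt (fun v => fst (Hf t v) * fst (Kf t v) + snd (Hf t v) * snd (Kf t v)) 0 (2 * PI)).
  { intros t Ht. repeat split; apply (cont2_ex_RInt (fun u v => _) t); intros th _;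
      destruct (Hc t th Ht) as [a [b [p q]]]; repeat c2step. }
  assert (Hn2 : forall t, lo < t < hi -> 0 <= n2 t).
  { intros t Ht. apply RInt_ge_0. apply PI2_pos. apply (Hex t Ht). intros; nra. }
  assert (HnK : forall t, lo < t < hi -> 0 <= nK t).
  { intros t Ht. apply RInt_ge_0. apply PI2_pos. apply (Hex t Ht). intros; nra. }
  assert (Hd2 : forall t, lo < t < hi -> is_derive n2 t (2 * X t)).
  { intros t Ht. unfold X. rewrite <- RInt_scalR by apply (Hex t Ht). unfold n2.
    apply (param_deriv (fun u v => fst (Hf u v) ^ 2 + snd (Hf u v) ^ 2)
      (fun u v => 2 * (fst (Hf u v) * fst (Kf u v) + snd (Hf u v) * snd (Kf u v))) 0 (2 * PI) lo hi t Ht).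
    - intros u th Hu. destruct (Hd u th Hu) as [Da Db].
      eapply dR_eq. apply (dR_plus (fun u => fst (Hf u th) ^ 2) (fun u => snd (Hf u th) ^ 2)).
      apply (dR_pow2 (fun u => fst (Hf u th))). exact Da. apply (dR_pow2 (fun u => snd (Hf u th))). exact Db. ring.
    - intros u th Hu. destruct (Hc u th Hu) as [a [b [p q]]]. repeat c2step.
    - intros u th Hu. destruct (Hc u th Hu) as [a [b [p q]]]. repeat c2step. }
  assert (HCS : forall t, lo < t < hi -> c * X t <= sqrt (c * n2 t) * sqrt (c * nK t)).
  { intros t Ht. destruct (Hex t Ht) as [e1 [e2 e3]].
    pose proof (CS_int (fun v => fst (Hf t v)) (fun v => snd (Hf t v)) (fun v => fst (Kf t v))
      (fun v => snd (Kf t v)) 0 (2 * PI) PI2_pos e1 e2 e3) as C1. fold (X t) (n2 t) (nK t) in C1.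
    rewrite <- sqrt_mult by (apply Rmult_le_pos; [lra| auto]).
    apply Rle_trans with (Rabs (c * X t)). apply Rle_abs.
    rewrite <- sqrt_Rsqr_abs. apply sqrt_le_1_alt. unfold Rsqr.
    replace (c * X t * (c * X t)) with (c * c * (X t ^ 2)) by ring.
    replace (c * n2 t * (c * nK t)) with (c * c * (n2 t * nK t)) by ring.
    apply Rmult_le_compat_l. nra. exact C1. }
  assert (HnrmH : forall t, lo < t < hi -> nrm (Hf t) = sqrt (c * n2 t)) by (intros; apply nrm_eq).
  assert (HnrmK : forall t, lo < t < hi -> nrm (Kf t) = sqrt (c * nK t)) by (intros; apply nrm_eq).
  assert (Key : forall e, 0 < e -> sqrt (c * n2 be + e) - B be <= sqrt (c * n2 al + e) - B al).
  { intros e He.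
    assert (M := mono_deriv (fun t => - (sqrt (c * n2 t + e) - B t))
       (fun t => - ((c * (2 * X t)) / (2 * sqrt (c * n2 t + e)) - dB t)) al be ltac:(lra)).
    cut (- (sqrt (c * n2 al + e) - B al) <= - (sqrt (c * n2 be + e) - B be)). lra.
    apply M.
    - intros t Ht. apply dR_opp. apply (dR_minus (fun t => sqrt (c * n2 t + e)) B).
      apply (is_derive_sqrt (fun t => c * n2 t + e)).
      eapply dR_eq. apply (dR_plus (fun t => c * n2 t) (fun _ => e)).
      apply (dR_mult (fun _ => c) n2). apply dR_const. apply Hd2; lra. apply dR_const. ring.
      pose proof (Hn2 t ltac:(lra)). nra. apply HB; lra.
    - intros t Ht. pose proof (Hn2 t ltac:(lra)). pose proof (HnK t ltac:(lra)).
      pose proof (HCS t ltac:(lra)). destruct (HB t Ht) as [_ HBt].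
      rewrite HnrmK in HBt by lra.
      assert (Hs : 0 < sqrt (c * n2 t + e)) by (apply sqrt_lt_R0; nra).
      assert (Hs2 : sqrt (c * n2 t) <= sqrt (c * n2 t + e)) by (apply sqrt_le_1_alt; lra).
      assert (c * (2 * X t) / (2 * sqrt (c * n2 t + e)) <= sqrt (c * nK t)).
      { apply Rmult_le_reg_r with (2 * sqrt (c * n2 t + e)). lra.
        unfold Rdiv. rewrite Rmult_assoc, Rinv_l by lra. rewrite Rmult_1_r.
        pose proof (sqrt_pos (c * nK t)). pose proof (sqrt_pos (c * n2 t)). nra. }
      lra. }
  rewrite (HnrmH be) by lra. rewrite (HnrmH al) by lra.
  apply (le_of_eps_bound _ _ 1). lra. intros e He.
  specialize (Key (e ^ 2) ltac:(apply pow_lt; lra)).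
  pose proof (Hn2 be ltac:(lra)). pose proof (Hn2 al ltac:(lra)).
  assert (sqrt (c * n2 be) <= sqrt (c * n2 be + e ^ 2)) by (apply sqrt_le_1_alt; pose proof (pow2_ge_0 e); lra).
  pose proof (sqrt_add_sq (c * n2 al) e ltac:(nra) ltac:(lra)).
  lra.
Qed.

Lemma cont2_cosf (f : R -> R -> R) x y : continuity_2d_pt f x y ->
  continuity_2d_pt (fun u v => cos (f u v)) x y.
Proof. intros H. apply (continuity_1d_2d_pt_comp cos f). apply continuity_cos. exact H. Qed.
Lemma cont2_sinf (f : R -> R -> R) x y : continuity_2d_pt f x y ->
  continuity_2d_pt (fun u v => sin (f u v)) x y.
Proof. intros H. apply (continuity_1d_2d_pt_comp sin f). apply continuity_sin. exact H. Qed.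
Lemma cont2_pown (f : R -> R -> R) n x y : continuity_2d_pt f x y ->
  continuity_2d_pt (fun u v => f u v ^ n) x y.
Proof.
  intros H. induction n as [|n IH].
  apply continuity_2d_pt_ext with (fun _ _ => 1). intros; simpl; reflexivity. apply continuity_2d_pt_const.
  apply continuity_2d_pt_ext with (fun u v => f u v * f u v ^ n). intros; simpl; ring.
  apply continuity_2d_pt_mult; auto.
Qed.
Lemma cont2_divc (f : R -> R -> R) c x y : continuity_2d_pt f x y ->
  continuity_2d_pt (fun u v => f u v / c) x y.
Proof.
  intros H. apply continuity_2d_pt_ext with (fun u v => f u v * / c). intros; reflexivity.
  apply continuity_2d_pt_mult; auto. apply continuity_2d_pt_const.
Qed.

Ltac c2step2 := match goal with
  | |- continuity_2d_pt (fun _ _ => ?c) _ _ => apply continuity_2d_pt_const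
  | |- continuity_2d_pt (fun u _ => u) _ _ => apply continuity_2d_pt_id1
  | |- continuity_2d_pt (fun _ v => v) _ _ => apply continuity_2d_pt_id2
  | |- continuity_2d_pt (fun u v => cos (@?f u v)) _ _ => apply (cont2_cosf f)
  | |- continuity_2d_pt (fun u v => sin (@?f u v)) _ _ => apply (cont2_sinf f)
  | |- continuity_2d_pt (fun u v => @?f u v ^ ?n) _ _ => apply (cont2_pown f n)
  | |- continuity_2d_pt (fun u v => @?f u v / ?c) _ _ => apply (cont2_divc f c)
  | |- continuity_2d_pt (fun u v => @?f u v + @?g u v) _ _ => apply (continuity_2d_pt_plus f g)
  | |- continuity_2d_pt (fun u v => @?f u v - @?g u v) _ _ => apply (continuity_2d_pt_minus f g)
  | |- continuity_2d_pt (fun u v => - @?f u v) _ _ => apply (continuity_2d_pt_opp f)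
  | |- continuity_2d_pt (fun u v => @?f u v * @?g u v) _ _ => apply (continuity_2d_pt_mult f g)
  | |- continuity_2d_pt _ _ _ => assumption
  end.

Lemma cont_term (F : nat -> C -> C) rho s x y : holo (F s) (F (S s)) -> Rabs x < 1 ->
  continuity_2d_pt (fun u v => fst (term F rho s u v)) x y /\
  continuity_2d_pt (fun u v => snd (term F rho s u v)) x y.
Proof.
  intros HF Hx. destruct (holo_cont2 (F s) (F (S s)) x y HF Hx) as [a b].
  unfold term, sc, Ep. simpl. split; repeat c2step2.
Qed.

Lemma cont_Kterm (F : nat -> C -> C) rho s x y : holo (F (S s)) (F (S (S s))) -> Rabs x < 1 ->
  continuity_2d_pt (fun u v => fst (Kterm F rho s u v)) x y /\
  continuity_2d_pt (fun u v => snd (Kterm F rho s u v)) x y.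
Proof.
  intros HF Hx. destruct (holo_cont2 (F (S s)) (F (S (S s))) x y HF Hx) as [a b].
  unfold Kterm, sc, Ep. simpl. split; repeat c2step2.
Qed.

Lemma cont_Tsum (F : nat -> C -> C) rho n x y : (forall j, holo (F j) (F (S j))) -> Rabs x < 1 ->
  continuity_2d_pt (fun u v => fst (Tsum F rho n u v)) x y /\
  continuity_2d_pt (fun u v => snd (Tsum F rho n u v)) x y.
Proof.
  intros HF Hx. induction n as [|n [IHa IHb]].
  - simpl. split; apply continuity_2d_pt_const.
  - destruct (cont_term F rho n x y (HF n) Hx) as [a b]. simpl.
    split; apply continuity_2d_pt_plus; assumption.
Qed.

Lemma nrm_triangle (phi psi : R -> C) :
  ex_RInt (fun v => fst (phi v) ^ 2 + snd (phi v) ^ 2) 0 (2 * PI) ->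
  ex_RInt (fun v => fst (psi v) ^ 2 + snd (psi v) ^ 2) 0 (2 * PI) ->
  ex_RInt (fun v => fst (phi v) * fst (psi v) + snd (phi v) * snd (psi v)) 0 (2 * PI) ->
  nrm (fun v => Cplus (phi v) (psi v)) <= nrm phi + nrm psi.
Proof.
  intros e1 e2 e3. rewrite !nrm_eq.
  set (A := RInt (fun v => fst (phi v) ^ 2 + snd (phi v) ^ 2) 0 (2 * PI)).
  set (B := RInt (fun v => fst (psi v) ^ 2 + snd (psi v) ^ 2) 0 (2 * PI)).
  set (X := RInt (fun v => fst (phi v) * fst (psi v) + snd (phi v) * snd (psi v)) 0 (2 * PI)).
  set (c := / (2 * PI)).
  assert (Hc0 : 0 < c) by (unfold c; apply Rinv_0_lt_compat; pose proof PI_RGT_0; lra).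
  assert (HA : 0 <= A) by (apply RInt_ge_0; [apply PI2_pos|auto|intros; nra]).
  assert (HB : 0 <= B) by (apply RInt_ge_0; [apply PI2_pos|auto|intros; nra]).
  assert (HCS := CS_int (fun v => fst (phi v)) (fun v => snd (phi v)) (fun v => fst (psi v))
      (fun v => snd (psi v)) 0 (2 * PI) PI2_pos e1 e2 e3). fold A B X in HCS.
  assert (E : RInt (fun v => fst (Cplus (phi v) (psi v)) ^ 2 + snd (Cplus (phi v) (psi v)) ^ 2) 0 (2 * PI)
     = A + 2 * X + B).
  { transitivity (RInt (fun v => ((fst (phi v) ^ 2 + snd (phi v) ^ 2) + 2 * (fst (phi v) * fst (psi v) + snd (phi v) * snd (psi v)))
        + 1 * (fst (psi v) ^ 2 + snd (psi v) ^ 2)) 0 (2 * PI)).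
    - apply RInt_ext. intros; simpl. rring.
    - rewrite (RInt_lin (fun v => fst (phi v) ^ 2 + snd (phi v) ^ 2 + 2 * (fst (phi v) * fst (psi v) + snd (phi v) * snd (psi v)))
         (fun v => fst (psi v) ^ 2 + snd (psi v) ^ 2) 1 0 (2 * PI)).
      rewrite (RInt_lin (fun v => fst (phi v) ^ 2 + snd (phi v) ^ 2)
         (fun v => fst (phi v) * fst (psi v) + snd (phi v) * snd (psi v)) 2 0 (2 * PI) e1 e3).
      fold A B X. rring.
      apply (ex_RInt_lin (fun v => fst (phi v) ^ 2 + snd (phi v) ^ 2)
         (fun v => fst (phi v) * fst (psi v) + snd (phi v) * snd (psi v))); auto. auto. }
  rewrite E.
  assert (HX : X <= sqrt A * sqrt B).
  { rewrite <- sqrt_mult by auto. apply Rle_trans with (Rabs X). apply Rle_abs.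
    rewrite <- sqrt_Rsqr_abs. apply sqrt_le_1_alt. unfold Rsqr. simpl in HCS. rewrite Rmult_1_r in HCS. exact HCS. }
  rewrite <- (sqrt_pow2 (sqrt (c * A) + sqrt (c * B))) by (pose proof (sqrt_pos (c*A)); pose proof (sqrt_pos (c*B)); lra).
  apply sqrt_le_1_alt.
  replace ((sqrt (c * A) + sqrt (c * B)) ^ 2) with
    (sqrt (c * A) * sqrt (c * A) + 2 * (sqrt (c * A) * sqrt (c * B)) + sqrt (c * B) * sqrt (c * B)) by ring.
  rewrite !sqrt_sqrt by nra.
  rewrite !sqrt_mult by lra.
  replace (sqrt c * sqrt A * (sqrt c * sqrt B)) with ((sqrt c * sqrt c) * (sqrt A * sqrt B)) by ring.
  rewrite sqrt_sqrt by lra. nra.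
Qed.

Lemma nrm_scale (w : R -> C) (c : R) s :
  ex_RInt (fun v => fst (w v) ^ 2 + snd (w v) ^ 2) 0 (2 * PI) ->
  nrm (fun v => sc c (Cmult (Ep s v) (w v))) = Rabs c * nrm w.
Proof.
  intros e1. rewrite !nrm_eq.
  assert (E : RInt (fun v => fst (sc c (Cmult (Ep s v) (w v))) ^ 2 + snd (sc c (Cmult (Ep s v) (w v))) ^ 2) 0 (2 * PI)
     = c ^ 2 * RInt (fun v => fst (w v) ^ 2 + snd (w v) ^ 2) 0 (2 * PI)).
  { rewrite <- RInt_scalR by auto. apply RInt_ext. intros v _. unfold sc, Ep. simpl.
    pose proof (cs1 (INR s * v)) as HCS.
    match goal with |- ?LL = ?RR =>
      assert (E : LL - RR = c ^ 2 * (fst (w v) ^ 2 + snd (w v) ^ 2) * (cos (INR s * v) ^ 2 + sin (INR s * v) ^ 2 - 1)) by (change (@eq R (LL - RR) (c ^ 2 * (fst (w v) ^ 2 + snd (w v) ^ 2) * (cos (INR s * v) ^ 2 + sin (INR s * v) ^ 2 - 1))); ring);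
      rewrite HCS in E; change (@eq R LL RR); lra end. }
  rewrite E.
  replace (/ (2 * PI) * (c ^ 2 * RInt (fun v => fst (w v) ^ 2 + snd (w v) ^ 2) 0 (2 * PI)))
    with (c ^ 2 * (/ (2 * PI) * RInt (fun v => fst (w v) ^ 2 + snd (w v) ^ 2) 0 (2 * PI))) by ring.
  assert (HX : 0 <= / (2 * PI) * RInt (fun v => fst (w v) ^ 2 + snd (w v) ^ 2) 0 (2 * PI)).
  { apply Rmult_le_pos. apply Rlt_le, Rinv_0_lt_compat. pose proof PI_RGT_0; lra.
    apply RInt_ge_0; [apply PI2_pos|auto|intros; nra]. }
  rewrite (sqrt_mult (c ^ 2)) by (auto; apply pow2_ge_0).
  replace (c ^ 2) with (Rsqr c) by (unfold Rsqr; ring). rewrite sqrt_Rsqr_abs. reflexivity.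
Qed.

Fixpoint ssum (f : nat -> R) (n : nat) : R :=
  match n with O => 0 | S n => ssum f n + f n end.

Lemma ssum_sum f N : ssum f (S N) = sum_f_R0 f N.
Proof. induction N as [|N IH]. simpl. ring. change (ssum f (S (S N))) with (ssum f (S N) + f (S N)).
  rewrite IH. simpl. reflexivity. Qed.

Lemma Mmean2_nrm G r : Mmean2 G r = nrm (fun v => G (Pp r v)).
Proof. reflexivity. Qed.

Lemma nrm_zero : nrm (fun _ => (0, 0)) = 0.
Proof.
  rewrite nrm_eq. simpl. rewrite (RInt_ext _ (fun _ => 0)) by (intros; simpl; ring).
  rewrite RInt_const. unfold scal; simpl; unfold mult; simpl. rewrite Rmult_0_r, Rmult_0_r. apply sqrt_0.
Qed.

Lemma nrm_Tsum (F : nat -> C -> C) rho r n : (forall j, holo (F j) (F (S j))) -> Rabs r < 1 -> r <= rho ->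
  nrm (Tsum F rho n r) <= ssum (fun s => (rho - r) ^ s / INR (Factorial.fact s) * Mmean2 (F s) r) n.
Proof.
  intros HF Hr Hrr. induction n as [|n IH].
  - change (nrm (fun _ => (0, 0)) <= 0). rewrite nrm_zero. lra.
  - simpl. eapply Rle_trans.
    + apply (nrm_triangle (Tsum F rho n r) (term F rho n r));
        apply (cont2_ex_RInt (fun u v => _) r); intros th _;
        destruct (cont_Tsum F rho n r th HF Hr) as [a b];
        destruct (cont_term F rho n r th (HF n) Hr) as [c d]; repeat c2step.
    + apply Rplus_le_compat. exact IH.
      unfold term. rewrite nrm_scale. rewrite Mmean2_nrm. right. f_equal.
      apply Rabs_pos_eq. apply Rmult_le_pos. apply pow_le; lra.
      apply Rlt_le, Rinv_0_lt_compat. apply INR_fact_lt_0.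
      apply (cont2_ex_RInt (fun u v => fst (F n (Pp u v)) ^ 2 + snd (F n (Pp u v)) ^ 2) r).
      intros th _. destruct (holo_cont2 (F n) (F (S n)) r th (HF n) Hr) as [a b]. repeat c2step.
Qed.

Lemma Tsum_at_rho (F : nat -> C -> C) rho N th :
  fst (Tsum F rho (S N) rho th) = fst (F 0%nat (Pp rho th)) /\
  snd (Tsum F rho (S N) rho th) = snd (F 0%nat (Pp rho th)).
Proof.
  induction N as [|N [IHa IHb]].
  - unfold Tsum, term, sc, Ep. simpl. rewrite Rmult_0_l, cos_0, sin_0. split; field.
  - change (Tsum F rho (S (S N)) rho th) with (Cplus (Tsum F rho (S N) rho th) (term F rho (S N) rho th)).
    unfold term, sc. cbn [fst snd Cplus]. rewrite IHa, IHb. rewrite Rminus_eq_0.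
    rewrite pow_i by lia. unfold Rdiv. rewrite !Rmult_0_l. split; ring.
Qed.

Lemma taylor_bound (F : nat -> C -> C) N rho r (B dB : R -> R) :
  (forall j, holo (F j) (F (S j))) -> 0 < r <= rho -> rho < 1 ->
  (forall t, r <= t <= rho -> is_derive B t (dB t) /\
     (rho - t) ^ N / INR (Factorial.fact N) * Mmean2 (F (S N)) t <= dB t) ->
  Mmean2 (F 0%nat) rho <= ssum (fun s => (rho - r) ^ s / INR (Factorial.fact s) * Mmean2 (F s) r) (S N)
     + (B rho - B r).
Proof.
  intros HF Hr Hrho HB.
  assert (Hra : Rabs r < 1) by (apply Rabs_lt_between; lra).
  assert (E : Mmean2 (F 0%nat) rho = nrm (Tsum F rho (S N) rho)).
  { rewrite Mmean2_nrm, !nrm_eq. f_equal. f_equal. apply RInt_ext. intros th _.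
    destruct (Tsum_at_rho F rho N th) as [a b]. rewrite a, b. reflexivity. }
  rewrite E.
  eapply Rle_trans.
  apply (minkowski (Tsum F rho (S N)) (Kterm F rho N) B dB (-1) 1 r rho); try lra.
  - intros t th Ht. apply d_Tsum. exact HF. apply Rabs_lt_between; lra.
  - intros t th Ht. assert (Hta : Rabs t < 1) by (apply Rabs_lt_between; lra).
    destruct (cont_Tsum F rho (S N) t th HF Hta) as [a b].
    destruct (cont_Kterm F rho N t th (HF (S N)) Hta) as [c d]. auto.
  - intros t Ht. destruct (HB t Ht) as [D1 D2]. split. exact D1.
    eapply Rle_trans; [|exact D2]. right.
    assert (Hta : Rabs t < 1) by (apply Rabs_lt_between; lra).
    unfold Kterm. rewrite nrm_scale. rewrite Mmean2_nrm. f_equal.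
    apply Rabs_pos_eq. apply Rmult_le_pos. apply pow_le; lra.
    apply Rlt_le, Rinv_0_lt_compat. apply INR_fact_lt_0.
    apply (cont2_ex_RInt (fun u v => fst (F (S N) (Pp u v)) ^ 2 + snd (F (S N) (Pp u v)) ^ 2) t).
    intros th _. destruct (holo_cont2 (F (S N)) (F (S (S N))) t th (HF (S N)) Hta) as [a b]. repeat c2step.
  - apply Rplus_le_compat_r. apply nrm_Tsum; auto; lra.
Qed.

Lemma dR_exp (f : R -> R) (x df : R) : is_derive f x df ->
  is_derive (fun t => exp (f t)) x (exp (f x) * df).
Proof.
  intros H. eapply dR_eq. apply (is_derive_comp exp f x (exp (f x)) df). apply is_derive_exp. exact H.
  unfold scal; simpl; unfold mult; simpl. change (df * exp (f x) = exp (f x) * df). ring.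
Qed.

Fixpoint PhiS (a rho : R) (n : nat) (t : R) : R :=
  match n with
  | O => exp (- a * (rho - t)) / a
  | S n => (PhiS a rho n t + exp (- a * (rho - t)) * (rho - t) ^ (S n) / INR (Factorial.fact (S n))) / a
  end.

Lemma d_PhiS a rho n t : 0 < a ->
  is_derive (PhiS a rho n) t (exp (- a * (rho - t)) * (rho - t) ^ n / INR (Factorial.fact n)).
Proof.
  intros Ha. induction n as [|n IH].
  - simpl. eapply dR_eq. apply (dR_divc (fun t => exp (- a * (rho - t))) a).
    apply (dR_exp (fun t => - a * (rho - t))). 
    apply (dR_mult (fun _ => - a) (fun t => rho - t)). apply dR_const.
    apply (dR_minus (fun _ => rho) (fun t => t)). apply dR_const. apply dR_id.
    field. lra.
  - change (PhiS a rho (S n)) with (fun t => (PhiS a rho n t + exp (- a * (rho - t)) * (rho - t) ^ (S n) / INR (Factorial.fact (S n))) / a).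
    eapply dR_eq. apply (dR_divc (fun t => PhiS a rho n t + exp (- a * (rho - t)) * (rho - t) ^ (S n) / INR (Factorial.fact (S n))) a).
    apply (dR_plus (PhiS a rho n)). exact IH.
    apply (dR_divc (fun t => exp (- a * (rho - t)) * (rho - t) ^ (S n))).
    apply (dR_mult (fun t => exp (- a * (rho - t))) (fun t => (rho - t) ^ (S n))).
    apply (dR_exp (fun t => - a * (rho - t))). 
    apply (dR_mult (fun _ => - a) (fun t => rho - t)). apply dR_const.
    apply (dR_minus (fun _ => rho) (fun t => t)). apply dR_const. apply dR_id.
    apply (dR_pow (fun t => rho - t)).
    apply (dR_minus (fun _ => rho) (fun t => t)). apply dR_const. apply dR_id.
    rewrite fact_simpl, mult_INR. cbn [Init.Nat.pred]. rewrite S_INR. simpl pow.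
    field. split. apply INR_fact_neq_0. split. pose proof (pos_INR n); lra. lra.
Qed.

Lemma PhiS_rho a rho n : 0 < a -> PhiS a rho n rho = / a ^ (S n).
Proof.
  intros Ha. induction n as [|n IH].
  - simpl. rewrite Rminus_eq_0, Rmult_0_r, exp_0. field. lra.
  - change (PhiS a rho (S n) rho) with ((PhiS a rho n rho + exp (- a * (rho - rho)) * (rho - rho) ^ (S n) / INR (Factorial.fact (S n))) / a).
    rewrite IH. rewrite Rminus_eq_0. rewrite pow_i by lia. simpl pow. field.
    split. apply pow_nonzero; lra. split. lra. apply INR_fact_neq_0.
Qed.

Lemma PhiS_ge0 a rho n t : 0 < a -> t <= rho -> 0 <= PhiS a rho n t.
Proof.
  intros Ha Ht. induction n as [|n IH].
  - simpl. apply Rmult_le_pos. apply Rlt_le, exp_pos. apply Rlt_le, Rinv_0_lt_compat; lra.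
  - change (PhiS a rho (S n) t) with ((PhiS a rho n t + exp (- a * (rho - t)) * (rho - t) ^ (S n) / INR (Factorial.fact (S n))) / a).
    apply Rmult_le_pos; [|apply Rlt_le, Rinv_0_lt_compat; lra].
    apply Rplus_le_le_0_compat. exact IH.
    apply Rmult_le_pos. apply Rmult_le_pos. apply Rlt_le, exp_pos. apply pow_le; lra.
    apply Rlt_le, Rinv_0_lt_compat. apply INR_fact_lt_0.
Qed.

Lemma ln_sqrt x : 0 < x -> ln (sqrt x) = / 2 * ln x.
Proof.
  intros Hx. assert (Hs : 0 < sqrt x) by (apply sqrt_lt_R0; auto).
  rewrite <- (sqrt_sqrt x) at 2 by lra. rewrite ln_mult by auto. field.
Qed.

Lemma Mmean2_uu G t : Mmean2 G t = sqrt (/ (2 * PI) * uu G t).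
Proof. rewrite Mmean2_nrm, nrm_eq. reflexivity. Qed.

Lemma sum_ge_first (f : nat -> R) N : (forall s, 0 <= f s) -> f 0%nat <= sum_f_R0 f N.
Proof.
  intros H. induction N as [|N IH]. simpl; lra. simpl. pose proof (H (S N)). lra.
Qed.

Lemma sum_nonneg (f : nat -> R) N : (forall s, 0 <= f s) -> 0 <= sum_f_R0 f N.
Proof. intros H. pose proof (sum_ge_first f N H). pose proof (H 0%nat). lra. Qed.

Lemma ssum_mono (f g : nat -> R) n : (forall s, f s <= g s) -> ssum f n <= ssum g n.
Proof. intros H. induction n as [|n IH]; simpl. lra. pose proof (H n). lra. Qed.

Lemma PI2_gt0 : 0 < 2 * PI.
Proof. pose proof PI_RGT_0; lra. Qed.

Lemma main_pointwise (k : nat) (F : nat -> C -> C) r rho :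
  (1 <= k)%nat -> (forall j, holo (F j) (F (S j))) ->
  (forall y, 0 <= y < 1 -> Mmean2 (F k) y <= 1) ->
  0 < r < 1 -> Mmean2 (F k) r < 1 -> 0 <= rho < 1 ->
  Mmean2 (F 0%nat) rho <=
    sum_f_R0 (fun s => (1 - r) ^ s / INR (Factorial.fact s) * Mmean2 (F s) r) (pred k)
    + log_term k r (Mmean2 (F k) r).
Proof.
  intros Hk HF HM Hr Hm Hrho.
  set (S0 := sum_f_R0 (fun s => (1 - r) ^ s / INR (Factorial.fact s) * Mmean2 (F s) r) (pred k)).
  set (m := Mmean2 (F k) r).
  assert (Hm1 : m < 1) by exact Hm.
  assert (Hlr : ln r < 0) by (rewrite <- ln_1; apply ln_increasing; lra).
  assert (Hterm : forall s, 0 <= (1 - r) ^ s / INR (Factorial.fact s) * Mmean2 (F s) r).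
  { intros s. apply Rmult_le_pos. apply Rmult_le_pos. apply pow_le; lra.
    apply Rlt_le, Rinv_0_lt_compat, INR_fact_lt_0. apply sqrt_pos. }
  assert (HS0 : Mmean2 (F 0%nat) r <= S0).
  { unfold S0. eapply Rle_trans; [|apply sum_ge_first; exact Hterm]. simpl. lra. }
  assert (Hm0 : 0 <= m) by apply sqrt_pos.
  assert (HL : 0 <= log_term k r m).
  { unfold log_term. destruct (Req_EM_T m 0) as [Z|Z]. lra. apply pow_le.
    assert (0 < m) by (destruct Hm0; auto; congruence).
    assert (Hlm : ln m < 0) by (rewrite <- ln_1; apply ln_increasing; lra).
    replace (ln r / ln m) with ((- ln r) / (- ln m)) by (field; lra).
    apply Rlt_le, Rdiv_lt_0_compat; lra. }
  assert (HuL : forall y, 0 <= y < 1 -> uu (F k) y <= 2 * PI).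
  { intros y Hy. pose proof (HM y Hy) as H. rewrite Mmean2_uu in H.
    assert (H2 : / (2 * PI) * uu (F k) y <= 1).
    { destruct (Rle_dec (/ (2 * PI) * uu (F k) y) 1); auto. exfalso.
      assert (1 < sqrt (/ (2 * PI) * uu (F k) y)). { rewrite <- sqrt_1. apply sqrt_lt_1_alt. lra. }
      lra. }
    pose proof PI2_gt0.
    apply Rmult_le_compat_l with (r := 2 * PI) in H2; [|lra].
    rewrite <- Rmult_assoc, Rinv_r, Rmult_1_l in H2 by lra. lra. }
  destruct (Rle_dec rho r) as [Hle|Hgt].
  -
    eapply Rle_trans; [|apply Rplus_le_compat; [exact HS0| exact HL]]. rewrite Rplus_0_r.
    rewrite !Mmean2_uu. apply sqrt_le_1_alt. apply Rmult_le_compat_l.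
    apply Rlt_le, Rinv_0_lt_compat, PI2_gt0.
    apply (uu_mono (F 0%nat) (F 1%nat) (F 2%nat) (F 3%nat)); auto; lra.
  - apply Rnot_le_lt in Hgt.
    destruct k as [|N]; [lia|]. cbn [pred] in *. fold m in HL |- *.
    assert (HS : ssum (fun s => (rho - r) ^ s / INR (Factorial.fact s) * Mmean2 (F s) r) (S N) <= S0).
    { unfold S0. rewrite <- ssum_sum. apply ssum_mono. intros s.
      apply Rmult_le_compat_r. apply sqrt_pos. apply Rmult_le_compat_r.
      apply Rlt_le, Rinv_0_lt_compat, INR_fact_lt_0. apply pow_incr. lra. }
    assert (Hfam : holo (F (S N)) (F (S (S N))) /\ holo (F (S (S N))) (F (S (S (S N)))) /\
                   holo (F (S (S (S N)))) (F (S (S (S (S N)))))) by auto.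
    destruct Hfam as [Ha [Hb Hc]].
    destruct (Req_dec m 0) as [E0|Epos].
    +
      assert (Hur : uu (F (S N)) r = 0).
      { unfold m in E0. rewrite Mmean2_uu in E0. apply sqrt_eq_0 in E0.
        apply Rmult_integral in E0. destruct E0 as [E|E]; auto.
        exfalso. pose proof (Rinv_0_lt_compat _ PI2_gt0). lra.
        apply Rmult_le_pos. apply Rlt_le, Rinv_0_lt_compat, PI2_gt0.
        apply (uu_ge0 _ _ r Ha). apply Rabs_lt_between; lra. }
      eapply Rle_trans.
      apply (taylor_bound F N rho r (fun _ => 0) (fun _ => 0)); auto; try lra.
      { intros t Ht. split. apply dR_const.
        destruct (tc_final (F (S N)) _ _ _ r t (2 * PI) Ha Hb Hc ltac:(lra) ltac:(lra) PI2_gt0 HuL) as [T _].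
        rewrite Mmean2_uu, (T Hur), Rmult_0_r, sqrt_0. lra. }
      lra.
    +
      assert (Hmp : 0 < m) by lra.
      assert (Hlm : ln m < 0) by (rewrite <- ln_1; apply ln_increasing; lra).
      set (a := ln m / ln r).
      assert (Ha0 : 0 < a).
      { unfold a. replace (ln m / ln r) with ((- ln m) / (- ln r)) by (field; lra).
        apply Rdiv_lt_0_compat; lra. }
      assert (Hur : 0 < uu (F (S N)) r).
      { destruct (Rle_lt_or_eq_dec _ _ (uu_ge0 _ _ r Ha ltac:(apply Rabs_lt_between; lra))) as [P|P]; auto.
        exfalso. unfold m in Epos. rewrite Mmean2_uu, <- P, Rmult_0_r, sqrt_0 in Epos. lra. }
      eapply Rle_trans.
      apply (taylor_bound F N rho r (PhiS a rho N)
        (fun t => exp (- a * (rho - t)) * (rho - t) ^ N / INR (Factorial.fact N))); auto; try lra.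
      { intros t Ht. split. apply d_PhiS; auto.
        replace (exp (- a * (rho - t)) * (rho - t) ^ N / INR (Factorial.fact N)) with
          ((rho - t) ^ N / INR (Factorial.fact N) * exp (- a * (rho - t))) by (field; apply INR_fact_neq_0).
        apply Rmult_le_compat_l. apply Rmult_le_pos. apply pow_le; lra.
        apply Rlt_le, Rinv_0_lt_compat, INR_fact_lt_0.
        destruct (tc_final (F (S N)) _ _ _ r t (2 * PI) Ha Hb Hc ltac:(lra) ltac:(lra) PI2_gt0 HuL) as [_ T].
        specialize (T Hur).
        assert (Hlt : ln t < 0) by (rewrite <- ln_1; apply ln_increasing; lra).
        set (lam := ln t / ln r) in T.
        set (ur := uu (F (S N)) r) in *.
        assert (Hm2 : ln m = / 2 * (ln ur - ln (2 * PI))).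
        { unfold m. rewrite Mmean2_uu. fold ur.
          rewrite ln_sqrt by (apply Rmult_lt_0_compat; [apply Rinv_0_lt_compat, PI2_gt0|auto]).
          rewrite ln_mult by (auto; apply Rinv_0_lt_compat, PI2_gt0).
          rewrite ln_Rinv by apply PI2_gt0. ring. }
        rewrite Mmean2_uu.
        assert (T2 : / (2 * PI) * uu (F (S N)) t <= exp (lam * (ln ur - ln (2 * PI)))).
        { replace (exp (lam * (ln ur - ln (2 * PI)))) with
            (/ (2 * PI) * exp (lam * ln ur + (1 - lam) * ln (2 * PI))).
          apply Rmult_le_compat_l. apply Rlt_le, Rinv_0_lt_compat, PI2_gt0. exact T.
          rewrite <- (exp_ln (/ (2 * PI))) by (apply Rinv_0_lt_compat, PI2_gt0).
          rewrite <- exp_plus. f_equal. rewrite ln_Rinv by apply PI2_gt0. ring. }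
        apply Rle_trans with (sqrt (exp (lam * (ln ur - ln (2 * PI))))).
        apply sqrt_le_1_alt. exact T2.
        replace (lam * (ln ur - ln (2 * PI))) with (2 * (lam * ln m)) by (rewrite Hm2; field).
        replace (exp (2 * (lam * ln m))) with (Rsqr (exp (lam * ln m))).
        rewrite sqrt_Rsqr by (apply Rlt_le, exp_pos).
        apply exp_le_mono.
        replace (lam * ln m) with (a * ln t) by (unfold lam, a; field; lra).
        pose proof (ln_le_sub1 t ltac:(lra)). nra.
        unfold Rsqr. rewrite <- exp_plus. f_equal. ring. }
      rewrite PhiS_rho by auto.
      pose proof (PhiS_ge0 a rho N r Ha0 ltac:(lra)).
      unfold log_term. destruct (Req_EM_T m 0) as [Z|Z]; [lra|].
      replace (ln r / ln m) with (/ a) by (unfold a; field; lra).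
      rewrite pow_inv. lra.
Qed.

Theorem lemma4 (k : nat) (f : C -> C) (F : nat -> C -> C) :
  (1 <= k)%nat ->
  in_Hk2 k f F ->
  Rbar_le (Mradial1 (F k)) 1 ->
  forall r : R, 0 < r < 1 ->
  Mmean2 (F k) r < 1 ->
  H2norm f <=
    sum_f_R0 (fun s => (1 - r) ^ s / INR (Factorial.fact s) * Mmean2 (F s) r) (pred k)
    + log_term k r (Mmean2 (F k) r).
Proof.
  intros Hk [[Hf0 HFd] HH] Hb r Hr Hm.
  assert (HF : forall j, holo (F j) (F (S j))) by (intros j z Hz; apply HFd; exact Hz).
  assert (HM : forall y, 0 <= y < 1 -> Mmean2 (F k) y <= 1).
  { intros y Hy. unfold Mradial1 in Hb.
    destruct (Lub_Rbar_correct (fun x => exists r, 0 <= r < 1 /\ x = Mmean2 (F k) r)) as [Hub _].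
    assert (H1 := Hub (Mmean2 (F k) y) (ex_intro _ y (conj Hy eq_refl))).
    assert (H2 := Rbar_le_trans _ _ _ H1 Hb). simpl in H2. exact H2. }
  set (Bd := sum_f_R0 (fun s => (1 - r) ^ s / INR (Factorial.fact s) * Mmean2 (F s) r) (pred k)
    + log_term k r (Mmean2 (F k) r)).
  assert (Hpt : forall rho, 0 <= rho < 1 -> Mmean2 f rho <= Bd).
  { intros rho Hrho.
    assert (E : Mmean2 f rho = Mmean2 (F 0%nat) rho).
    { unfold Mmean2. f_equal. f_equal. apply RInt_ext. intros t _.
      rewrite Hf0. reflexivity. change (Cmod (Pp rho t) < 1). rewrite Cmod_Pp.
      apply Rabs_lt_between; lra. }
    rewrite E. apply main_pointwise; auto. }
  unfold H2norm, Mradial1.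
  destruct (Lub_Rbar_correct (fun x => exists r, 0 <= r < 1 /\ x = Mmean2 f r)) as [Hub Hlub].
  assert (Hle : Rbar_le (Lub_Rbar (fun x => exists r, 0 <= r < 1 /\ x = Mmean2 f r)) Bd).
  { apply Hlub. intros x [rho [Hrho Ex]]. subst x. simpl. apply Hpt. exact Hrho. }
  assert (H0 := Hub (Mmean2 f 0) (ex_intro _ 0 (conj (conj (Rle_refl 0) Rlt_0_1) eq_refl))).
  destruct (Lub_Rbar (fun x => exists r, 0 <= r < 1 /\ x = Mmean2 f r)) as [l| |]; simpl in *.
  - exact Hle.
  - contradiction.
  - contradiction.
Qed.
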